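(* Let $H=(E,\{X_i:i\in[n]\})$ be a hypergraph and $t_1,\dots,t_n$ integers with $0\le t_i\le|X_i|$ satisfying: (H2) $|X_i\cap X_j|\le1$ for all distinct $i,j$; (H3) there are no $a,b,c\in E$ with $\{a,b\},\{a,c\},\{b,c\}$ all hyperedges; (T) for each $i$, either $t_i=1$ or $\min\{w(e):e\in X_i\}\le t_i<|X_i|$. Let $\rho(A)=\sum_{i=1}^n\min\{|A\cap X_i|,t_i\}$ for $A\subseteq E$. Let $\sigma$ be any polymatroid on $E$ such that $\sigma(A)=\rho(A)$ for every $A\subseteq E$ satisfying at least one of: (a) $|A|\le3$; (b) $|A|=4$ and there are three hyperedges $X_h,X_i,X_j$ with $t_h=t_i=t_j=1$ such that some element of $A$ lies in exactly one of these three hyperedges and each of the other three elements of $A$ lies in exactly two of them; (c) $A\subseteq X_i$ and $|A|\le t_i+1$ for some $i\in[n]$; (d) $A\subseteq X_i\triangle X_j$ for some $i,j\in[n]$ with $X_i\cap X_j\ne\emptyset$, where $|A\cap X_i|\le t_i$ and $|A\cap X_j|\le t_j$. Then, for each positive integer $k$, from every element of $\Delta_\sigma^k$ one can construct a proper $k$-coloring $c$ of the line graph $G_H$, and this coloring satisfies $\sigma(E)\ge c_1+2c_2^+$. If $\sigma=\rho$, then the image of the map $\phi$ (defined below) on proper $k$-colorings of $G_H$ is exactly $\Delta_\rho^k$. If $\sigma(E)<\chi(G_H)$, then $\sigma$ is indecomposable.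
   Context: A polymatroid on a finite set $E$ is a function $\rho:2^E\to\mathbb{Z}$ that is normalized, non-decreasing and submodular. A hypergraph is $H=(E,\mathcal{E})$ with $E$ finite and $\mathcal{E}=\{X_i:i\in[n]\}$ a set of nonempty subsets of $E$; $w(e)$ is the number of hyperedges containing $e$; $\triangle$ is symmetric difference. The line graph $G_H$ has vertex set $[n]$ with $ij$ an edge iff $i\ne j$ and $X_i\cap X_j\ne\emptyset$. For a proper $k$-coloring $c:[n]\to[k]$, $c_1$ (resp. $c_2^+$) is the number of $i\in[k]$ with $|c^{-1}(i)|=1$ (resp. $\ge2$). $\Delta_\sigma^k$ is the set of $k$-tuples $(N_1,\dots,N_k)$ of matroids on $E$ with $\sigma=r_{N_1}+\cdots+r_{N_k}$. A polymatroid is indecomposable if it is not a sum of rank functions of finitely many matroids on $E$. The map $\phi$ sends a proper $k$-coloring $c$ to $(N_1,\dots,N_k)$ with $N_i=\bigl(\bigoplus_{h:c(h)=i}U_{t_h,X_h}\bigr)\oplus U_{0,Y}$, $Y=E-\bigcup_{h:c(h)=i}X_h$, where $U_{r,X}$ is the rank-$r$ uniform matroid on $X$. *)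

(* Defs.v *)
From mathcomp Require Import all_boot all_order all_algebra.
Set Implicit Arguments. Unset Strict Implicit. Unset Printing Implicit Defensive.
Import GRing.Theory Num.Theory.
Local Open Scope ring_scope.

Section Defs.
Variable E : finType.

Definition polymatroid (s : {set E} -> int) : Prop :=
  [/\ s set0 = 0,
      (forall A B : {set E}, A \subset B -> s A <= s B) &
      (forall A B : {set E}, s (A :|: B) + s (A :&: B) <= s A + s B)].

Definition matroid_rank (r : {set E} -> nat) : Prop :=
  [/\ (forall A : {set E}, (r A <= #|A|)%N),
      (forall A B : {set E}, A \subset B -> (r A <= r B)%N) &
      (forall A B : {set E}, (r (A :|: B) + r (A :&: B) <= r A + r B)%N)].

Definition in_Delta (s : {set E} -> int) (k : nat) (N : 'I_k -> {set E} -> nat) : Prop :=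
  (forall i, matroid_rank (N i)) /\
  (forall A : {set E}, s A = ((\sum_(i < k) N i A)%N)%:Z).

Definition decomposable (s : {set E} -> int) : Prop :=
  exists m : nat, exists N : 'I_m -> {set E} -> nat, in_Delta s N.

Definition indecomposable (s : {set E} -> int) : Prop := ~ decomposable s.

Variable n : nat.
Variable X : 'I_n -> {set E}.
Variable t : 'I_n -> nat.

Definition w (e : E) : nat := #|[set i : 'I_n | e \in X i]|.

Definition rho (A : {set E}) : nat := (\sum_(i < n) minn #|A :&: X i| (t i))%N.

Definition lg_adj (i j : 'I_n) : bool := (i != j) && (X i :&: X j != set0).

Definition proper_coloring (k : nat) (c : 'I_n -> 'I_k) : Prop :=
  forall i j : 'I_n, lg_adj i j -> c i != c j.

Definition proper_coloringb (k : nat) (c : {ffun 'I_n -> 'I_k}) : bool :=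
  [forall i, forall j, lg_adj i j ==> (c i != c j)].

Definition colorable (k : nat) : bool := [exists c : {ffun 'I_n -> 'I_k}, proper_coloringb c].

Lemma colorable_n : exists k, colorable k.
Proof.
exists n; apply/existsP; exists [ffun i => i].
apply/forallP => i; apply/forallP => j; apply/implyP => /andP [Hij _].
by rewrite !ffunE.
Qed.

Definition chi : nat := ex_minn colorable_n.

Definition c1 (k : nat) (c : 'I_n -> 'I_k) : nat :=
  #|[set i : 'I_k | #|[set h : 'I_n | c h == i]| == 1%N]|.
Definition c2p (k : nat) (c : 'I_n -> 'I_k) : nat :=
  #|[set i : 'I_k | (2 <= #|[set h : 'I_n | c h == i]|)%N]|.

(* phi(c)_i = (direct sum over h with c h = i of U_{t_h, X_h}) (+) U_{0,Y},
   given by its rank function A |-> sum_{h : c h = i} min(|A cap X_h|, t_h). *)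
Definition phi_rank (k : nat) (c : 'I_n -> 'I_k) (i : 'I_k) (A : {set E}) : nat :=
  (\sum_(h < n | c h == i) minn #|A :&: X h| (t h))%N.

Definition cnt3 (h i j : 'I_n) (x : E) : nat :=
  ((x \in X h) + (x \in X i) + (x \in X j))%N.

Definition cond_a (A : {set E}) : Prop := (#|A| <= 3)%N.
Definition cond_b (A : {set E}) : Prop :=
  #|A| = 4%N /\
  exists h i j : 'I_n, [/\ h != i, h != j & i != j] /\
    [/\ t h = 1%N, t i = 1%N & t j = 1%N] /\
    exists2 a, a \in A & cnt3 h i j a = 1%N /\
      (forall b, b \in A -> b != a -> cnt3 h i j b = 2%N).
Definition cond_c (A : {set E}) : Prop :=
  exists i : 'I_n, A \subset X i /\ (#|A| <= t i + 1)%N.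
Definition cond_d (A : {set E}) : Prop :=
  exists i j : 'I_n, [/\ X i :&: X j != set0,
    A \subset (X i :\: X j) :|: (X j :\: X i),
    (#|A :&: X i| <= t i)%N & (#|A :&: X j| <= t j)%N].

End Defs.

(* Main.v *)
Require Import Defs.
From mathcomp Require Import all_boot all_order all_algebra.
From mathcomp Require Import zify.
Set Implicit Arguments. Unset Strict Implicit. Unset Printing Implicit Defensive.

Section Mat.
Variable (T : finType) (r : {set T} -> nat).
Hypothesis Hr : matroid_rank r.
Implicit Types A B C Y : {set T}.

Lemma r_card A : r A <= #|A|. Proof. by case: Hr. Qed.
Lemma r_mono A B : A \subset B -> r A <= r B. Proof. by case: Hr => _ H _; apply: H. Qed.
Lemma r_sub A B : r (A :|: B) + r (A :&: B) <= r A + r B. Proof. by case: Hr => _ _ H; apply: H. Qed.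
Lemma r0 : r set0 = 0. Proof. by apply/eqP; rewrite -leqn0 -(cards0 T) r_card. Qed.
Lemma r1 x : r [set x] <= 1. Proof. by rewrite -(cards1 x) r_card. Qed.
Lemma r_subadd A B : r (A :|: B) <= r A + r B.
Proof. exact: leq_trans (leq_addr _ _) (r_sub A B). Qed.

Definition nl A := \sum_(x in A) r [set x].

Lemma nl_split A B : B \subset A -> nl A = nl B + nl (A :\: B).
Proof. by move=> sBA; rewrite /nl (big_setID B) /= (setIidPr sBA). Qed.

Lemma nl_le A : nl A <= #|A|.
Proof. rewrite /nl -sum1_card; apply: leq_sum => x _; exact: r1. Qed.

Lemma r_le_nl A : r A <= nl A.
Proof.
elim: {A}_.+1 {-2}A (ltnSn #|A|) => // m IH A hA.
case: (set_0Vmem A) => [->|[x xA]]; first by rewrite r0.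
rewrite /nl (big_setD1 x xA) /=.
rewrite -{1}(setD1K xA); apply: leq_trans (r_subadd _ _) _.
rewrite leq_add2l; apply: IH.
by rewrite (cardsD1 x A) xA in hA.
Qed.

Lemma r_le_sub A B : B \subset A -> r A <= r B + nl (A :\: B).
Proof.
move=> sBA; have {1}-> : A = B :|: (A :\: B).
  by apply/setP=> x; rewrite !inE; case: (boolP (x \in B)) => // /(subsetP sBA) ->.
by apply: leq_trans (r_subadd _ _) _; rewrite leq_add2l r_le_nl.
Qed.

Definition def A := nl A - r A.

Lemma def_mono A B : B \subset A -> def B <= def A.
Proof.
move=> sBA; rewrite /def (nl_split sBA).
have := r_le_sub sBA; have := r_le_nl B; have := r_mono sBA; lia.
Qed.

Lemma def_loop A x : x \in A -> r [set x] = 0 -> def A <= def (A :\ x).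
Proof.
move=> xA rx; rewrite /def /nl (big_setD1 x xA) /= rx add0n.
have : r (A :\ x) <= r A by apply: r_mono; exact: subsetDl.
lia.
Qed.

Lemma par_trans a b c : r [set a; b] <= 1 -> r [set b; c] <= 1 -> r [set b] = 1 ->
  r [set a; c] <= 1.
Proof.
move=> hab hbc hb.
have h1 := r_sub [set a; b] [set b; c].
have h2 : r [set b] <= r ([set a; b] :&: [set b; c]).
  by apply: r_mono; apply/subsetP => x; rewrite !inE => /eqP ->; rewrite eqxx !orbT.
have h3 : r [set a; c] <= r ([set a; b] :|: [set b; c]).
  by apply: r_mono; apply/subsetP => x; rewrite !inE => /orP [] ->; rewrite ?orbT.
lia.
Qed.

Lemma add_par B s u : s \in B -> r [set s; u] <= 1 -> r [set s] = 1 -> r (u |: B) <= r B.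
Proof.
move=> sB hsu hs.
have h1 := r_sub B [set s; u].
have h2 : r [set s] <= r (B :&: [set s; u]).
  by apply: r_mono; apply/subsetP => x; rewrite !inE => /eqP ->; rewrite sB eqxx.
have h3 : u |: B = B :|: [set s; u].
  apply/setP => x; rewrite !inE; case: (x =P s) => [->|]; rewrite ?sB ?orbT //.
  by rewrite orbC.
rewrite h3; lia.
Qed.

Lemma clos B Y : (forall x, x \in Y -> r (x |: B) <= r B) -> r (B :|: Y) <= r B.
Proof.
elim: {Y}_.+1 {-2}Y (ltnSn #|Y|) => // m IH Y hY hx.
case: (set_0Vmem Y) => [->|[y yY]]; first by rewrite setU0.
have e : B :|: Y = (B :|: (Y :\ y)) :|: (y |: B).
  apply/setP => z; rewrite !inE; case: (z =P y) => [->|]; rewrite ?yY ?orbT //=.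
  by case: (z \in B); case: (z \in Y).
have IH' : r (B :|: (Y :\ y)) <= r B.
  apply: IH; first by rewrite (cardsD1 y Y) yY in hY.
  by move=> x; rewrite inE => /andP [_ /hx].
have h1 := r_sub (B :|: (Y :\ y)) (y |: B).
have h2 : r B <= r ((B :|: (Y :\ y)) :&: (y |: B)).
  by apply: r_mono; apply/subsetP => z zB; rewrite !inE zB orbT.
have h3 := hx y yY.
rewrite e; lia.
Qed.

Lemma def_ge_card (I : finType) (Q : {set I}) (sf uf : I -> T) A :
  (forall q, q \in Q -> [/\ sf q \in A, uf q \in A, r [set sf q] = 1, r [set uf q] = 1 &
     r [set sf q; uf q] <= 1 /\ sf q \notin uf @: Q]) ->
  {in Q &, injective uf} -> #|Q| <= def A.
Proof.
move=> hQ inj.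
set U := uf @: Q.
have cU : #|U| = #|Q| by rewrite card_in_imset.
have sUA : U \subset A.
  by apply/subsetP => x /imsetP [q qQ ->]; case: (hQ q qQ).
have eA : A = (A :\: U) :|: U.
  apply/setP=> x; rewrite !inE; case: (boolP (x \in U)) => [xU|xU]; rewrite ?xU ?andbT ?orbF //.
  by rewrite (subsetP sUA x xU).
have hr : r A <= r (A :\: U).
  rewrite {1}eA; apply: clos => x /imsetP [q qQ ->].
  case: (hQ q qQ) => sA _ hs _ [hsu nU].
  apply: add_par hsu hs; by rewrite inE nU.
have hn : nl U = #|U|.
  rewrite /nl -sum1_card; apply: eq_bigr => x /imsetP [q qQ ->].
  by case: (hQ q qQ).
rewrite /def (nl_split sUA) hn cU -cU.
have := r_le_nl (A :\: U); lia.
Qed.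

End Mat.

Lemma sub_card (T : finType) (A : {set T}) m : m <= #|A| -> exists C : {set T}, C \subset A /\ #|C| = m.
Proof.
elim: m => [|m IH] h; first by exists set0; rewrite sub0set cards0.
have [C [sCA cC]] := IH (ltnW h).
have : ~~ (A \subset C).
  by apply/negP => /subset_leq_card; rewrite cC; lia.
case/subsetPn => x xA xC.
exists (x |: C); split; first by rewrite subUset sub1set xA sCA.
by rewrite cardsU1 xC cC.
Qed.

Lemma card_set_sum (T : finType) (P : pred T) : #|[set x | P x]| = \sum_(x : T) P x.
Proof. by rewrite -sum1dep_card big_mkcond /=; apply: eq_bigr => x _; case: (P x). Qed.

Section Hyp.
Variables (E : finType) (n : nat) (X : 'I_n -> {set E}) (t : 'I_n -> nat).
Hypothesis HXinj : injective X.
Hypothesis H2 : forall i j : 'I_n, i != j -> #|X i :&: X j| <= 1.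
Hypothesis HT : forall i, t i = 1 \/
          ((exists2 e, e \in X i & w X e <= t i) /\ t i < #|X i|).
Hypothesis HXne : forall i, X i != set0.
Hypothesis H3 : ~ exists a b c : E, [/\ a != b, a != c & b != c] /\
          exists i j l : 'I_n, [/\ X i = [set a; b], X j = [set a; c] & X l = [set b; c]].
Implicit Types A B C S U : {set E}.

Lemma w_sum e : w X e = \sum_(q < n) (e \in X q).
Proof. by rewrite /w card_set_sum. Qed.

Lemma t_pos q : 0 < t q.
Proof.
case: (HT q) => [->//|[[e eX hw] _]].
apply: leq_trans hw; rewrite /w card_gt0; apply/set0Pn; exists q; by rewrite inE.
Qed.

Lemma meet1 i q x y : i != q -> x \in X i -> y \in X i -> x \in X q -> y \in X q -> x = y.
Proof.
move=> iq xi yi xq yq; apply/eqP; apply: contraT => xy.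
have := H2 iq; have : [set x; y] \subset X i :&: X q.
  by apply/subsetP => z; rewrite !inE => /orP [] /eqP ->; rewrite ?xi ?xq ?yi ?yq.
move/subset_leq_card; rewrite cards2 xy; lia.
Qed.

Lemma rho1 e : rho X t [set e] = w X e.
Proof.
rewrite /rho w_sum; apply: eq_bigr => q _.
have := t_pos q; case: (boolP (e \in X q)) => h.
  have -> : [set e] :&: X q = [set e] by apply/setIidPl; rewrite sub1set.
  by rewrite cards1; lia.
have -> : [set e] :&: X q = set0.
  by apply/setP => x; rewrite !inE; case: (x =P e) => // ->; rewrite (negPf h).
by rewrite cards0; lia.
Qed.

Definition ex q A := #|A :&: X q| - t q.
Definition exc A := \sum_(q < n) ex q A.

Lemma cnt_split A : \sum_(q < n) #|A :&: X q| = rho X t A + exc A.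
Proof.
rewrite /rho /exc -big_split /=; apply: eq_bigr => q _; rewrite /ex; lia.
Qed.

Lemma wsum_cnt A : \sum_(x in A) w X x = \sum_(q < n) #|A :&: X q|.
Proof.
under eq_bigr do rewrite w_sum.
rewrite exchange_big /=; apply: eq_bigr => q _.
rewrite -sum1_card big_mkcond /= [RHS]big_mkcond /=.
by apply: eq_bigr => x _; rewrite !inE; case: (x \in A); case: (x \in X q).
Qed.


Definition cond A := cond_a A \/ cond_b X t A \/ cond_c X t A \/ cond_d X t A.

Variables (k : nat) (N : 'I_k -> {set E} -> nat).
Hypothesis hk : 0 < k.
Hypothesis HN : forall j, matroid_rank (N j).
Hypothesis Hc : forall A, cond A -> \sum_(j < k) N j A = rho X t A.

Definition defj j A := def (N j) A.
Definition nlj j A := nl (N j) A.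

Lemma cond1 e : cond [set e].
Proof. by left; rewrite /cond_a cards1. Qed.

Lemma sig1 e : \sum_(j < k) N j [set e] = w X e.
Proof. rewrite Hc. rewrite rho1. by []. exact: cond1. Qed.

Lemma Nle1 j e : N j [set e] <= 1.
Proof. exact: r1. Qed.

Lemma key A : cond A -> \sum_(j < k) defj j A = exc A.
Proof.
move=> cA.
have h1 : \sum_(j < k) nlj j A = \sum_(j < k) defj j A + \sum_(j < k) N j A.
  rewrite -big_split /=; apply: eq_bigr => j _; rewrite /defj /def /nlj.
  have := r_le_nl (HN j) A; lia.
have h2 : \sum_(j < k) nlj j A = \sum_(x in A) w X x.
  rewrite /nlj /nl exchange_big /=; apply: eq_bigr => x _; exact: sig1.
move: h1; rewrite h2 wsum_cnt cnt_split Hc //; lia.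
Qed.

Definition M e := [set j | N j [set e] == 1].

Lemma cardM e : #|M e| = w X e.
Proof.
rewrite -sig1 card_set_sum; apply: eq_bigr => j _.
by have := Nle1 j e; case: (N j [set e]) => [|[|]].
Qed.

Lemma exc_edge i C : C \subset X i -> exc C = #|C| - t i.
Proof.
move=> sC; rewrite /exc (bigD1 i) //= big1 ?addn0.
  by rewrite /ex (setIidPl sC).
move=> q qi; rewrite /ex.
have : #|C :&: X q| <= 1.
  apply: leq_trans (H2 qi); apply: subset_leq_card.
  by rewrite setIC; apply: setIS.
have := t_pos q; lia.
Qed.

Lemma cond_edge i C : C \subset X i -> #|C| <= (t i).+1 -> cond C.
Proof. by move=> sC cC; right; right; left; exists i; rewrite addn1. Qed.

Lemma sum_ge (f : 'I_k -> nat) j : f j <= \sum_(j0 < k) f j0.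
Proof. by rewrite (bigD1 j) //= leq_addr. Qed.

Lemma sum_ge2 (f : 'I_k -> nat) j j' : j != j' -> f j + f j' <= \sum_(j0 < k) f j0.
Proof.
move=> jj; rewrite (bigD1 j) //= (bigD1 j') /=; first by rewrite addnA leq_addr.
by rewrite eq_sym.
Qed.

Lemma sum_ge_set (f : 'I_k -> nat) (S : {set 'I_k}) :
  (forall j, j \in S -> 0 < f j) -> #|S| <= \sum_(j0 < k) f j0.
Proof.
move=> h; rewrite (bigID (mem S)) /=; apply: leq_trans (leq_addr _ _).
rewrite -sum1_card; apply: leq_sum => j; exact: h.
Qed.

Lemma small i C j : C \subset X i -> #|C| <= t i -> defj j C = 0.
Proof.
move=> sC cC; have := key (cond_edge sC (leqW cC)).
rewrite (exc_edge sC) => h; have := sum_ge (defj^~ C) j; lia.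
Qed.

Lemma circ1 i C : C \subset X i -> #|C| = (t i).+1 -> \sum_(j < k) defj j C = 1.
Proof.
by move=> sC cC; rewrite key ?(exc_edge sC) ?cC ?subSnn //; apply: (cond_edge sC); rewrite cC.
Qed.

Definition has j C := 0 < defj j C.

Lemma circ_uniq i C j j' : C \subset X i -> #|C| = (t i).+1 -> has j C -> has j' C -> j = j'.
Proof.
move=> sC cC hj hj'; apply/eqP; apply: contraT => jj.
have := sum_ge2 (defj^~ C) jj; rewrite (circ1 sC cC); move: hj hj'; rewrite /has; lia.
Qed.

Lemma nl_all j C : (forall x, x \in C -> N j [set x] = 1) -> nlj j C = #|C|.
Proof. by move=> h; rewrite /nlj /nl -sum1_card; apply: eq_bigr. Qed.

Lemma circ_nl i C j x : C \subset X i -> #|C| = (t i).+1 -> has j C -> x \in C ->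
  N j [set x] = 1.
Proof.
move=> sC cC hj xC; have := Nle1 j x.
case h: (N j [set x]) => [|[|//]] _ //.
have := def_loop (HN j) xC h.
have -> : def (N j) (C :\ x) = 0.
  apply: (@small i); first by apply: subset_trans (subD1set _ _) sC.
  by move: cC; rewrite (cardsD1 x C) xC; lia.
by move: hj; rewrite /has /defj; lia.
Qed.

Lemma def_le j C : defj j C <= \sum_(j0 < k) defj j0 C.
Proof. exact: (sum_ge (defj^~ C)). Qed.

Lemma circ_r i C j : C \subset X i -> #|C| = (t i).+1 -> has j C -> N j C = t i.
Proof.
move=> sC cC hj.
have hn : nlj j C = #|C| by apply: nl_all => x; exact: circ_nl sC cC hj.
have := def_le j C; rewrite (circ1 sC cC).
have := r_le_nl (HN j) C; move: hj; rewrite /has /defj /def -/(nlj j C) hn cC; lia.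
Qed.

Lemma small_r i C j : C \subset X i -> #|C| <= t i -> (forall x, x \in C -> N j [set x] = 1) ->
  N j C = #|C|.
Proof.
move=> sC cC h; have := small j sC cC; rewrite /defj /def -/(nlj j C) nl_all //.
have := r_card (HN j) C; lia.
Qed.

Definition j0 : 'I_k := Ordinal hk.
Definition colC C := odflt j0 [pick j | has j C].

Lemma colC_has i C : C \subset X i -> #|C| = (t i).+1 -> has (colC C) C.
Proof.
move=> sC cC; rewrite /colC; case: pickP => [j //|none].
have := circ1 sC cC; rewrite big1 // => j _.
by have := none j; rewrite /has; case: (defj j C).
Qed.

Lemma colC_uniq i C j : C \subset X i -> #|C| = (t i).+1 -> has j C -> colC C = j.
Proof. move=> sC cC hj; apply: (circ_uniq sC cC) => //; exact: colC_has sC cC. Qed.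

Lemma mono_lem i U C1 C2 p : U \subset X i -> #|U| = (t i).+2 -> C1 \subset U -> C2 \subset U ->
  C1 != C2 -> #|C1| = (t i).+1 -> #|C2| = (t i).+1 -> has p C1 -> has p C2 ->
  forall C, C \subset U -> #|C| = (t i).+1 -> has p C.
Proof.
move=> sU cU s1 s2 n12 c1 c2 h1 h2 C sC cC.
have sX1 : C1 \subset X i by apply: subset_trans sU.
have sX2 : C2 \subset X i by apply: subset_trans sU.
have U12 : C1 :|: C2 = U.
  apply/eqP; rewrite eqEcard subUset s1 s2 cU /=.
  have : ~~ (C2 \subset C1).
    apply/negP => s21; move/negP: n12; apply; apply/eqP/esym.
    by apply/eqP; rewrite eqEcard s21 c1 c2 leqnn.
  case/subsetPn => x x2 x1.
  have : x |: C1 \subset C1 :|: C2 by rewrite subUset sub1set inE x2 orbT subsetUl.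
  by move/subset_leq_card; rewrite cardsU1 x1 c1.
have cI : #|C1 :&: C2| = t i by have := cardsUI C1 C2; rewrite U12 cU c1 c2; lia.
have nlU : forall x, x \in U -> N p [set x] = 1.
  move=> x; rewrite -U12 inE => /orP [] xC; [exact: circ_nl sX1 c1 h1 xC| exact: circ_nl sX2 c2 h2 xC].
have rI : N p (C1 :&: C2) = t i.
  rewrite -cI; apply: (@small_r i).
  - by apply: subset_trans sX1; apply: subsetIl.
  - by rewrite cI.
  - by move=> x xI; apply: nlU; rewrite -U12 inE; move: xI; rewrite inE => /andP [-> _].
have rU : N p U <= t i.
  have := r_sub (HN p) C1 C2; rewrite U12 rI (circ_r sX1 c1 h1) (circ_r sX2 c2 h2); lia.
have rC : N p C <= t i by apply: leq_trans (r_mono (HN p) sC) rU.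
have hn : nlj p C = #|C| by apply: nl_all => x xC; apply: nlU; apply: (subsetP sC).
rewrite /has /defj /def -/(nlj p C) hn cC; lia.
Qed.

Definition mono_on U := forall C1 C2, C1 \subset U -> C2 \subset U ->
  #|C1| = #|U| - 1 -> #|C2| = #|U| - 1 -> colC C1 = colC C2.

Lemma subD1_card U y : y \in U -> #|U :\ y| = #|U| - 1.
Proof. by move=> yU; rewrite (cardsD1 y U) yU; lia. Qed.

Lemma goodU i U : U \subset X i -> #|U| = (t i).+2 ->
  (t i = 1 \/ exists2 e0, e0 \in U & w X e0 <= t i) -> mono_on U.
Proof.
move=> sU cU hT.
pose g y := colC (U :\ y).
have sUy : forall y, U :\ y \subset X i by move=> y; apply: subset_trans (subD1set _ _) sU.
have cUy : forall y, y \in U -> #|U :\ y| = (t i).+1 by move=> y yU; rewrite subD1_card // cU.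
have hg : forall y, y \in U -> has (g y) (U :\ y) by move=> y yU; apply: colC_has (sUy y) (cUy y yU).
case: (boolP [exists y, exists y', [&& y \in U, y' \in U, y != y' & g y == g y']]).
  case/existsP => y /existsP [y' /and4P [yU y'U yy /eqP gg]].
  have hall := @mono_lem i U (U :\ y) (U :\ y') (g y) sU cU (subD1set _ _) (subD1set _ _).
  have hne : U :\ y != U :\ y'.
    apply/negP => /eqP e; have : y \in U :\ y' by rewrite !inE yy yU.
    by rewrite -e !inE eqxx.
  move=> C1 C2 s1 s2 c1 c2; rewrite cU /= in c1 c2.
  rewrite (colC_uniq (subset_trans s1 sU) c1 (hall hne (cUy y yU) (cUy y' y'U) (hg y yU) _ C1 s1 c1)).
    rewrite (colC_uniq (subset_trans s2 sU) c2 (hall hne (cUy y yU) (cUy y' y'U) (hg y yU) _ C2 s2 c2)) //.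
    by rewrite gg; apply: hg.
  by rewrite gg; apply: hg.
move=> hn.
have ginj : {in U &, injective g}.
  move=> y y' yU y'U gg; apply/eqP; apply: contraT => yy.
  by move/negP: hn => hn; exfalso; apply: hn; apply/existsP; exists y; apply/existsP; exists y'; apply/and4P; split => //; apply/eqP.
case: hT => [t1|[e0 e0U hw]].
  have cA : cond U by left; rewrite /cond_a cU t1.
  have := key cA; rewrite (exc_edge sU) cU t1 /= => hs.
  have := @sum_ge_set (defj^~ U) (g @: U).
  rewrite card_in_imset // cU t1 hs.
  have : (forall j, j \in g @: U -> 0 < defj j U).
    move=> j /imsetP [y yU ->]; apply: leq_trans (hg y yU) _.
    exact: (def_mono (HN (g y)) (subD1set U y)).
  move=> h /(_ h); lia.
have sM : g @: (U :\ e0) \subset M e0.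
  apply/subsetP => j /imsetP [y yU ->]; rewrite inE; apply/eqP.
  move: yU; rewrite !inE => /andP [ye yU].
  apply: circ_nl (sUy y) (cUy y yU) (hg y yU) _; by rewrite !inE eq_sym ye e0U.
have := subset_leq_card sM; rewrite cardM card_in_imset ?subD1_card // ?cU.
  lia.
by move=> y y' /setD1P [_ yU] /setD1P [_ y'U]; apply: ginj.
Qed.

Lemma adj i A B : A \subset X i -> B \subset X i -> #|A| = (t i).+1 -> #|B| = (t i).+1 ->
  #|A :|: B| = (t i).+2 -> colC A = colC B.
Proof.
move=> sA sB cA cB cU.
have sU : A :|: B \subset X i by rewrite subUset sA sB.
have use : forall U, U \subset X i -> #|U| = (t i).+2 ->
    (t i = 1 \/ exists2 e0, e0 \in U & w X e0 <= t i) ->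
    forall C1 C2, C1 \subset U -> C2 \subset U -> #|C1| = (t i).+1 -> #|C2| = (t i).+1 ->
    colC C1 = colC C2.
  move=> U sU' cU' h C1 C2 s1 s2 c1 c2; apply: (goodU sU' cU' h) => //; by rewrite cU' ?c1 ?c2.
case: (HT i) => [t1|[[e0 e0X hw] _]].
  exact: (use _ sU cU (or_introl t1) A B (subsetUl _ _) (subsetUr _ _) cA cB).
case: (boolP (e0 \in A :|: B)) => e0U.
  exact: (use _ sU cU (or_intror (ex_intro2 _ _ e0 e0U hw)) A B (subsetUl _ _) (subsetUr _ _) cA cB).
have e0A : e0 \notin A by move: e0U; rewrite inE negb_or => /andP [].
have e0B : e0 \notin B by move: e0U; rewrite inE negb_or => /andP [].
have cI : #|A :&: B| = t i by have := cardsUI A B; rewrite cU cA cB; lia.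
have cS : #|e0 |: (A :&: B)| = (t i).+1 by rewrite cardsU1 inE (negPf e0A) cI.
have sS : e0 |: (A :&: B) \subset X i.
  by rewrite subUset sub1set e0X; apply: subset_trans (subsetIl _ _) sA.
transitivity (colC (e0 |: (A :&: B))).
  apply: (use (e0 |: A)) => //.
  - by rewrite subUset sub1set e0X sA.
  - by rewrite cardsU1 e0A cA.
  - by right; exists e0 => //; rewrite !inE eqxx.
  - exact: subsetUr.
  - by apply: setUS; apply: subsetIl.
apply: (use (e0 |: B)) => //.
- by rewrite subUset sub1set e0X sB.
- by rewrite cardsU1 e0B cB.
- by right; exists e0 => //; rewrite !inE eqxx.
- by apply: setUS; apply: subsetIr.
- exact: subsetUr.
Qed.

Lemma allsame i A B : A \subset X i -> B \subset X i -> #|A| = (t i).+1 -> #|B| = (t i).+1 ->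
  colC A = colC B.
Proof.
move=> + sB + cB.
elim: {A}_.+1 {-2}A (ltnSn #|A :\: B|) => // m IH A hm sA cA.
case: (set_0Vmem (A :\: B)) => [e|[a aAB]].
  have sAB : A \subset B by rewrite -setD_eq0 e.
  have -> // : A = B by apply/eqP; rewrite eqEcard sAB cA cB leqnn.
have cD : #|B :\: A| = #|A :\: B|.
  have := cardsID B A; have := cardsID A B; rewrite setIC; lia.
have : 0 < #|B :\: A| by rewrite cD card_gt0; apply/set0Pn; exists a.
rewrite card_gt0 => /set0Pn [b bBA].
move: aAB bBA; rewrite !inE => /andP [aB aA] /andP [bA bB].
set A' := b |: (A :\ a).
have bA' : b \notin A :\ a by rewrite inE negb_and bA orbT.
have cA' : #|A'| = (t i).+1 by rewrite cardsU1 bA' subD1_card // cA add1n subn1.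
have sA' : A' \subset X i.
  by rewrite subUset sub1set (subsetP sB b bB); apply: subset_trans (subD1set _ _) sA.
have eU : A :|: A' = b |: A.
  apply/setP => x; rewrite !inE; by case: (x \in A); case: (x == b); case: (x == a).
have -> : colC A = colC A'.
  apply: (adj sA sA' cA cA'); by rewrite eU cardsU1 bA cA.
apply: IH => //.
have e : A' :\: B = (A :\: B) :\ a.
  apply/setP => x; rewrite !inE; case: (x =P b) => [->|_]; first by rewrite bB /= andbF.
  by case: (x \in B); case: (x == a); case: (x \in A).
move: hm; rewrite e subD1_card; last by rewrite inE aB aA.
have : 0 < #|A :\: B| by rewrite card_gt0; apply/set0Pn; exists a; rewrite inE aB aA.
lia.
Qed.

Definition big i := t i < #|X i|.
Definition goodb i j := [forall C : {set E}, (C \subset X i) && (#|C| == (t i).+1) ==> has j C].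
Definition col i := odflt j0 [pick j | goodb i j].

Lemma col_good i C : big i -> C \subset X i -> #|C| = (t i).+1 -> has (col i) C.
Proof.
move=> bi sC cC.
have [C0 [s0 c0]] := sub_card bi.
have g0 : goodb i (colC C0).
  apply/forallP => D; apply/implyP => /andP [sD /eqP cD].
  rewrite (allsame s0 sD c0 cD); exact: colC_has sD cD.
rewrite /col; case: pickP => [j /forallP /(_ C) /implyP -> //|]; first by rewrite sC cC eqxx.
by move/(_ (colC C0)); rewrite g0.
Qed.

Lemma col_uniq i C j : C \subset X i -> #|C| = (t i).+1 -> has j C -> col i = j.
Proof.
move=> sC cC hj.
have bi : big i by rewrite /big -cC; apply: subset_leq_card.
exact: circ_uniq sC cC (col_good bi sC cC) hj.
Qed.

Lemma col_circ i C : big i -> C \subset X i -> #|C| = (t i).+1 -> N (col i) C = t i.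
Proof. move=> bi sC cC; exact: circ_r sC cC (col_good bi sC cC). Qed.

Lemma col_nl i x : big i -> x \in X i -> N (col i) [set x] = 1.
Proof.
move=> bi xi.
have : t i <= #|X i :\ x| by rewrite subD1_card //; move: bi; rewrite /big; lia.
case/sub_card => C [sC cC].
have xC : x \notin C by apply/negP => /(subsetP sC); rewrite !inE eqxx.
have sC' : x |: C \subset X i by rewrite subUset sub1set xi; apply: subset_trans sC (subD1set _ _).
have cC' : #|x |: C| = (t i).+1 by rewrite cardsU1 xC cC.
by apply: circ_nl sC' cC' (col_good bi sC' cC') _; rewrite !inE eqxx.
Qed.

Lemma col_pair i x y : big i -> t i = 1 -> x \in X i -> y \in X i -> x != y ->
  N (col i) [set x; y] <= 1.
Proof.
move=> bi t1 xi yi xy.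
have sC : [set x; y] \subset X i by apply/subsetP => z; rewrite !inE => /orP [] /eqP ->.
have cC : #|[set x; y]| = (t i).+1 by rewrite cards2 xy t1.
have := col_good bi sC cC; rewrite /has /defj /def.
have := nl_le (HN (col i)) [set x; y]; rewrite cards2 xy; lia.
Qed.

Lemma same_edge q q' x y : x != y -> x \in X q -> y \in X q -> x \in X q' -> y \in X q' -> q = q'.
Proof.
move=> xy xq yq xq' yq'; apply/eqP; apply: contraT => qq.
by move/eqP: xy => xy; exfalso; apply: xy; apply: (meet1 qq).
Qed.

Lemma pos_sum (f : 'I_n -> nat) : 0 < \sum_(q < n) f q -> exists q, 0 < f q.
Proof.
move=> h; apply/existsP; apply: contraT; rewrite negb_exists => /forallP hf.
move: h; rewrite big1 // => q _; by move: (hf q); case: (f q).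
Qed.

Lemma par_edge j x y : x != y -> N j [set x] = 1 -> N j [set y] = 1 -> N j [set x; y] <= 1 ->
  exists q, [/\ x \in X q, y \in X q, t q = 1 & col q = j].
Proof.
move=> xy hx hy hxy.
have hn : nlj j [set x; y] = 2.
  rewrite nl_all; first by rewrite cards2 xy.
  by move=> z; rewrite !inE => /orP [] /eqP ->.
have hd : has j [set x; y] by rewrite /has /defj /def -/(nlj j _) hn; lia.
have cA : cond [set x; y] by left; rewrite /cond_a cards2 xy.
have := key cA => hk'.
have : 0 < exc [set x; y] by rewrite -hk'; apply: leq_trans hd (def_le _ _).
case/pos_sum => q; rewrite /ex => hq.
have tq := t_pos q.
have c2 : #|[set x; y] :&: X q| = 2.
  have := subset_leq_card (subsetIl [set x; y] (X q)); rewrite cards2 xy; lia.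
have e2 : [set x; y] :&: X q = [set x; y].
  apply/eqP; rewrite eqEcard subsetIl c2 cards2 xy leqnn; done.
have xq : x \in X q.
  have : x \in [set x; y] :&: X q by rewrite e2 !inE eqxx.
  by rewrite inE => /andP [].
have yq : y \in X q.
  have : y \in [set x; y] :&: X q by rewrite e2 !inE eqxx orbT.
  by rewrite inE => /andP [].
have t1 : t q = 1 by lia.
exists q; split => //.
apply: (@col_uniq q [set x; y]) => //.
- by apply/subsetP => z; rewrite !inE => /orP [] /eqP ->.
- by rewrite cards2 xy t1.
Qed.

Lemma nopar i x y j : x \in X i -> y \in X i -> x != y -> 2 <= t i ->
  N j [set x] = 1 -> N j [set y] = 1 -> N j [set x; y] <= 1 -> False.
Proof.
move=> xi yi xy t2 hx hy hxy.
have [q [xq yq t1 _]] := par_edge xy hx hy hxy.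
have := same_edge xy xq yq xi yi => e; move: t2; rewrite -e t1.
done.
Qed.

Lemma card_part (I J : finType) (f : I -> J) (Q : {set I}) :
  #|Q| = \sum_(j : J) #|[set q in Q | f q == j]|.
Proof.
rewrite -sum1_card (partition_big f predT) //=; apply: eq_bigr => j _.
by rewrite -sum1_card; apply: eq_bigl => q; rewrite inE.
Qed.

Lemma big_of_two q x y : x != y -> x \in X q -> y \in X q -> t q = 1 -> big q.
Proof.
move=> xy xq yq t1; rewrite /big t1.
have : [set x; y] \subset X q by apply/subsetP => z; rewrite !inE => /orP [] /eqP ->.
by move/subset_leq_card; rewrite cards2 xy.
Qed.

Lemma counting A p i (SS TT : {set E}) (x0 : E) : cond A -> SS \subset A -> TT \subset A ->
  [disjoint SS & TT] -> SS \subset X i -> 2 <= t i -> has p A ->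
  (forall q, 0 < ex q A -> [/\ ex q A <= 1, t q = 1, col q != p, X q :&: SS != set0 &
       X q :&: TT != set0]) -> False.
Proof.
move=> cA sS sT dST sSi t2 hp hQ.
set Q := [set q | 0 < ex q A].
have hexc : exc A <= #|Q|.
  rewrite /exc (bigID (mem Q)) /= [X in _ + X]big1; last first.
    by move=> q; rewrite inE; case: (ex q A).
  rewrite addn0 -sum1_card; apply: leq_sum => q; rewrite inE => h.
  by case: (hQ q h).
pose sf q := odflt x0 [pick x in X q :&: SS].
pose uf q := odflt x0 [pick x in X q :&: TT].
have hsf : forall q, q \in Q -> sf q \in X q :&: SS.
  move=> q; rewrite inE => /hQ [_ _ _ h _]; rewrite /sf; case: pickP => [x //|].
  by move=> none; case/set0Pn: h => x; rewrite none.
have huf : forall q, q \in Q -> uf q \in X q :&: TT.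
  move=> q; rewrite inE => /hQ [_ _ _ _ h]; rewrite /uf; case: pickP => [x //|].
  by move=> none; case/set0Pn: h => x; rewrite none.
have dsu : forall q q', q \in Q -> q' \in Q -> sf q != uf q'.
  move=> q q' qQ q'Q; apply/negP => /eqP e.
  move: (hsf q qQ) (huf q' q'Q); rewrite !inE e => /andP [_ h1] /andP [_ h2].
  by rewrite (disjointFr dST h1) in h2.
have hr : forall r, #|[set q in Q | col q == r]| <= defj r A.
  move=> r; apply: (def_ge_card (HN r) (sf := sf) (uf := uf)).
    move=> q; rewrite inE => /andP [qQ /eqP cq].
    move: (hsf q qQ) (huf q qQ); rewrite !inE => /andP [sq sS'] /andP [uq uT'].
    have t1 : t q = 1 by move: qQ; rewrite inE => /hQ [].
    have bq : big q := big_of_two (dsu q q qQ qQ) sq uq t1.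
    split.
    - exact: (subsetP sS).
    - exact: (subsetP sT).
    - by rewrite -cq col_nl.
    - by rewrite -cq col_nl.
    split; first by rewrite -cq col_pair // dsu.
    apply/imsetP => [[q' q'Q' e]]; move: q'Q'; rewrite inE => /andP [q'Q _].
    by move: (dsu q q' qQ q'Q); rewrite e eqxx.
  move=> q q' /setIdP [qQ /eqP cq] /setIdP [q'Q /eqP cq'] e.
  apply/eqP; apply: contraT => qq; exfalso.
  move: (hsf q qQ) (huf q qQ) (hsf q' q'Q) (huf q' q'Q); rewrite !inE e.
  move=> /andP [sq sS'] /andP [uq uT'] /andP [sq' sS''] /andP [uq' _].
  have t1 : t q = 1 by move: qQ; rewrite inE => /hQ [].
  have t1' : t q' = 1 by move: q'Q; rewrite inE => /hQ [].
  have nsu : sf q != uf q' by rewrite -e dsu.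
  have nsu' : sf q' != uf q' by rewrite dsu.
  have bq : big q := big_of_two nsu sq uq t1.
  have bq' : big q' := big_of_two nsu' sq' uq' t1'.
  case: (eqVneq (sf q) (sf q')) => ss.
    move/eqP: qq; apply; apply: (same_edge nsu sq uq) => //; by rewrite ss.
  apply: (nopar (subsetP sSi _ sS') (subsetP sSi _ sS'') ss t2 (j := r)).
  - by rewrite -cq col_nl.
  - by rewrite -cq' col_nl.
  apply: (par_trans (HN r) (b := uf q')).
  - by rewrite -cq -e col_pair // e.
  - by rewrite setUC -cq' col_pair // eq_sym.
  - by rewrite -cq' col_nl.
have hp0 : [set q in Q | col q == p] = set0.
  apply/setP => q; rewrite !inE; apply/negbTE/negP => /andP [qQ /eqP cq].
  by case: (hQ q qQ) => _ _; rewrite cq eqxx.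
have := key cA; rewrite (bigD1 p) //= => hs.
have : #|Q| <= \sum_(r < k | r != p) defj r A.
  rewrite (card_part col) (bigD1 p) //= hp0 cards0 add0n.
  apply: leq_sum => r _; exact: hr.
move: hp; rewrite /has => hp hh.
set S := \sum_(r < k | r != p) defj r A in hs hh.
move: hexc; rewrite -hs; lia.
Qed.

Lemma card_le_of (A B : {set E}) : (forall x, x \in A -> x \in B) -> #|A| <= #|B|.
Proof. by move=> h; apply: subset_leq_card; apply/subsetP. Qed.

Lemma meet_le1 i q B : q != i -> B \subset X i -> #|B :&: X q| <= 1.
Proof.
move=> qi sB; apply: leq_trans (H2 qi); apply: card_le_of => x; rewrite !inE => /andP [xB ->].
by rewrite (subsetP sB x xB).
Qed.

Lemma ex0 q A : #|A :&: X q| <= t q -> ex q A = 0.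
Proof. by rewrite /ex; lia. Qed.

Lemma nl_set j A : (forall x, x \in A -> N j [set x] = 1) -> N j A < #|A| -> has j A.
Proof. by move=> h hr; rewrite /has /defj /def -/(nlj j A) nl_all //; lia. Qed.

Lemma pairP (x y z : E) : z \in [set x; y] -> z = x \/ z = y.
Proof. by rewrite !inE => /orP [] /eqP ->; [left|right]. Qed.

Lemma pair_sub (x y : E) B : x \in B -> y \in B -> [set x; y] \subset B.
Proof. by move=> xB yB; apply/subsetP => z /pairP [] ->. Qed.

Lemma inj_core i l e p : i != l -> big i -> big l -> e \in X i -> e \in X l ->
  col i = p -> col l = p -> 2 <= t i -> False.
Proof.
move=> il bi bl ei el ci cl t2.
have Xil : forall x, x \in X i -> x \in X l -> x = e.
  by move=> x xi xl; apply: (meet1 il).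
have nli : forall x, x \in X i -> N p [set x] = 1 by move=> x xi; rewrite -ci col_nl.
have nll : forall x, x \in X l -> N p [set x] = 1 by move=> x xl; rewrite -cl col_nl.
case: (boolP [exists s, exists u, [&& s \in X i, s != e, u \in X l, u != e &
     N p [set s; u] <= 1]]).
  case/existsP => s /existsP [u /and5P [si se ul ue psu]].
  have ui : u \notin X i by apply/negP => ui; move/eqP: ue; apply; apply: Xil.
  have su : s != u by apply/negP => /eqP e1; move: ui; rewrite -e1 si.
  case: (leqP 2 (t l)) => tl; last first.
    have tl1 : t l = 1 by have := t_pos l; clear -tl; lia.
    have peu : N p [set u; e] <= 1 by rewrite -cl col_pair // eq_sym.
    have pse := par_trans (HN p) psu peu (nll u ul).
    by apply: (nopar si ei se t2 (nli s si) (nli e ei) pse).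
  have [S' [sS' cS']] : exists S' : {set E}, S' \subset X i :\: [set e; s] /\ #|S'| = (t i).-1.
    apply: sub_card.
    have := cardsID [set e; s] (X i).
    have : #|X i :&: [set e; s]| <= 2.
      by apply: leq_trans (subset_leq_card (subsetIr _ _)) _; rewrite cards2; case: (e != s).
    move: bi; rewrite /big; clear -t2; lia.
  have S'i : S' \subset X i by apply: subset_trans sS' (subsetDl _ _).
  have eS' : e \notin S' by apply/negP => /(subsetP sS'); rewrite !inE eqxx.
  have sS'n : s \notin S' by apply/negP => /(subsetP sS'); rewrite !inE eqxx orbT.
  have uS' : u \notin S' by apply/negP => /(subsetP S'i); rewrite (negPf ui).
  set B := e |: S'.
  have Bi : B \subset X i by rewrite subUset sub1set ei S'i.
  have cB : #|B| = t i by rewrite cardsU1 eS' cS'; clear -t2; lia.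
  have uB : u \notin B by rewrite !inE negb_or ue uS'.
  have sB : s \notin B by rewrite !inE negb_or se sS'n.
  set A := u |: B.
  have cA : #|A| = (t i).+1 by rewrite cardsU1 uB cB.
  have nlA : forall x, x \in A -> N p [set x] = 1.
    move=> x /setU1P [->|xB]; [exact: nll| apply: nli; exact: (subsetP Bi)].
  have hA : has p A.
    apply: nl_set nlA _; rewrite cA ltnS.
    have Ci : s |: B \subset X i by rewrite subUset sub1set si Bi.
    have cC : #|s |: B| = (t i).+1 by rewrite cardsU1 sB cB.
    apply: leq_trans (r_mono (HN p) (_ : A \subset u |: (s |: B))) _.
      by rewrite /A setUS // subsetUr.
    apply: leq_trans (add_par (HN p) (_ : s \in s |: B) psu (nli s si)) _.
      by rewrite !inE eqxx.
    by rewrite -ci col_circ // ci.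
  have [q0 [sq0 uq0 tq0 _]] := par_edge su (nli s si) (nll u ul) psu.
  have q0i : q0 != i by apply/negP => /eqP e1; move: ui; rewrite -e1 uq0.
  have cAd : cond A.
    right; right; right; exists i, q0; split.
    - by apply/set0Pn; exists s; rewrite inE si sq0.
    - apply/subsetP => x /setU1P [->|xB].
        by rewrite !inE uq0 (negPf ui).
      have xi : x \in X i by apply: (subsetP Bi).
      have xq0 : x \notin X q0.
        apply/negP => xq; have e1 : x = s by apply: (meet1 q0i).
        by move: sB; rewrite -e1 xB.
      by rewrite !inE xi xq0.
    - apply: leq_trans (_ : #|B| <= _); last by rewrite cB.
      apply: card_le_of => x /setIP [/setU1P [->|xB] xi] //.
      by rewrite xi in ui.
    - rewrite tq0; apply: leq_trans (_ : #|[set u]| <= _); last by rewrite cards1.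
      apply: card_le_of => x /setIP [/setU1P [->|xB] xq]; first by rewrite inE.
      have xi : x \in X i by apply: (subsetP Bi).
      have e1 : x = s by apply: (meet1 q0i).
      by move: sB; rewrite -e1 xB.
  apply: (counting (SS := S') (TT := [set u]) e cAd _ _ _ S'i t2 hA).
  - by apply: subset_trans (subsetUr _ _) (subsetUr _ _).
  - by rewrite sub1set !inE eqxx.
  - by rewrite disjoint_sym disjoints1 uS'.
  move=> q hq.
  have qi : q != i.
    apply/negP => /eqP e1; move: hq; rewrite e1 ex0 //.
    rewrite -cB; apply: card_le_of => x /setIP [/setU1P [->|xB] xi] //.
    by rewrite xi in ui.
  have ql : q != l.
    apply/negP => /eqP e1; move: hq; rewrite e1 ex0 //.
    apply: leq_trans tl; apply: leq_trans (_ : #|[set e; u]| <= 2); last first.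
      by rewrite cards2; case: (e != u).
    apply: card_le_of => x /setIP [/setU1P [->|xB] xl]; first by rewrite !inE eqxx orbT.
    by rewrite (Xil x (subsetP Bi x xB) xl) !inE eqxx.
  have hBq := meet_le1 qi Bi.
  have cq2 : #|A :&: X q| <= (u \in X q) + #|B :&: X q|.
    rewrite /A setIUl; apply: leq_trans (leq_card_setU _ _) _; rewrite leq_add2r.
    by case: (boolP (u \in X q)) => uq; [|have -> : [set u] :&: X q = set0];
      [apply: leq_trans (subset_leq_card (subsetIl _ _)) _; rewrite cards1|
       apply/setP => x; rewrite !inE; case: (x =P u) => // ->; rewrite (negPf uq)|rewrite cards0].
  have tq := t_pos q.
  have uq : u \in X q by move: hq cq2; rewrite /ex; case: (u \in X q) => //=; clear -tq hBq; lia.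
  have : 0 < #|B :&: X q| by move: hq cq2; rewrite /ex uq /=; clear -tq hBq; lia.
  rewrite card_gt0 => /set0Pn [x]; rewrite inE => /andP [xB xq].
  have xe : x != e.
    apply/negP => /eqP e1; move/eqP: ql; apply; apply: (same_edge ue uq _ ul el).
    by rewrite -e1.
  have xS' : x \in S' by move: xB; rewrite !inE (negPf xe).
  have t1 : t q = 1 by move: hq cq2; rewrite /ex uq /=; clear -tq hBq; lia.
  split.
  - by move: cq2; rewrite uq /ex; clear -tq hBq; lia.
  - exact: t1.
  - apply/negP => /eqP cq.
    have xu : x != u by apply/negP => /eqP e1; move: uS'; rewrite -e1 xS'.
    have bq := big_of_two xu xq uq t1.
    have pxu : N p [set x; u] <= 1 by rewrite -cq col_pair.
    have pus : N p [set u; s] <= 1 by rewrite setUC.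
    have pxs := par_trans (HN p) pxu pus (nll u ul).
    have xs : x != s by apply/negP => /eqP e1; move: sS'n; rewrite -e1 xS'.
    exact: (nopar (subsetP S'i x xS') si xs t2 (nli x (subsetP S'i x xS')) (nli s si) pxs).
  - by apply/set0Pn; exists x; rewrite inE xq xS'.
  - by apply/set0Pn; exists u; rewrite !inE uq eqxx.
move=> nex.
have nb : forall s u, s \in X i -> s != e -> u \in X l -> u != e -> N p [set s; u] <= 1 -> False.
  move=> s u si se ul ue psu; move/negP: nex; apply; apply/existsP; exists s; apply/existsP; exists u.
  by rewrite si se ul ue psu.
have [S [sS cS]] : exists S : {set E}, S \subset X i :\ e /\ #|S| = t i.
  by apply: sub_card; rewrite subD1_card //; move: bi; rewrite /big; clear; lia.
have [T [sT cT]] : exists T : {set E}, T \subset X l :\ e /\ #|T| = t l.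
  by apply: sub_card; rewrite subD1_card //; move: bl; rewrite /big; clear; lia.
have Si : S \subset X i by apply: subset_trans sS (subD1set _ _).
have Tl : T \subset X l by apply: subset_trans sT (subD1set _ _).
have eS : e \notin S by apply/negP => /(subsetP sS); rewrite !inE eqxx.
have eT : e \notin T by apply/negP => /(subsetP sT); rewrite !inE eqxx.
have ST : forall x, x \in S -> x \in T -> False.
  move=> x xS xT; have e1 := Xil x (subsetP Si x xS) (subsetP Tl x xT).
  by move: eS; rewrite -e1 xS.
have STi : S :&: T = set0.
  by apply/setP => x; rewrite !inE; apply/negbTE/negP => /andP [xS xT]; apply: (ST x).
set A := S :|: T.
have cA : #|A| = t i + t l by rewrite cardsU STi cards0 cS cT subn0.
have nlA : forall x, x \in A -> N p [set x] = 1.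
  move=> x /setUP [xS|xT]; [apply: nli; exact: (subsetP Si)| apply: nll; exact: (subsetP Tl)].
have tl0 := t_pos l.
have hA : has p A.
  apply: nl_set nlA _; rewrite cA.
  have h1 := r_sub (HN p) (e |: S) (e |: T).
  have h2 : N p [set e] <= N p ((e |: S) :&: (e |: T)).
    by apply: (r_mono (HN p)); rewrite subsetI !sub1set !inE !eqxx.
  have h3 : N p A <= N p ((e |: S) :|: (e |: T)).
    by apply: (r_mono (HN p)); rewrite /A subUset; apply/andP; split; apply/subsetP => x xS;
      rewrite !inE xS ?orbT.
  have h4 : N p (e |: S) = t i.
    rewrite -ci col_circ //; first by rewrite subUset sub1set ei Si.
    by rewrite cardsU1 eS cS.
  have h5 : N p (e |: T) = t l.
    rewrite -cl col_circ //; first by rewrite subUset sub1set el Tl.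
    by rewrite cardsU1 eT cT.
  move: h1 h2 h3; rewrite h4 h5 (nll e el); clear -t2 tl0; lia.
have cAd : cond A.
  right; right; right; exists i, l; split.
  - by apply/set0Pn; exists e; rewrite inE ei el.
  - apply/subsetP => x /setUP [xS|xT].
      have xi := subsetP Si x xS.
      have xl : x \notin X l by apply/negP => xl; move: eS; rewrite -(Xil x xi xl) xS.
      by rewrite !inE xi xl.
    have xl := subsetP Tl x xT.
    have xi : x \notin X i by apply/negP => xi; move: eT; rewrite -(Xil x xi xl) xT.
    by rewrite !inE xi xl.
  - rewrite -cS; apply: card_le_of => x /setIP [/setUP [//|xT] xi].
    by move: eT; rewrite -(Xil x xi (subsetP Tl x xT)) xT.
  - rewrite -cT; apply: card_le_of => x /setIP [/setUP [xS|//] xl].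
    by move: eS; rewrite -(Xil x (subsetP Si x xS) xl) xS.
apply: (counting (SS := S) (TT := T) e cAd _ _ _ Si t2 hA).
- exact: subsetUl.
- exact: subsetUr.
- by rewrite -setI_eq0 STi.
move=> q hq.
have qi : q != i.
  apply/negP => /eqP e1; move: hq; rewrite e1 ex0 //.
  rewrite -cS; apply: card_le_of => x /setIP [/setUP [//|xT] xi].
  by move: eT; rewrite -(Xil x xi (subsetP Tl x xT)) xT.
have ql : q != l.
  apply/negP => /eqP e1; move: hq; rewrite e1 ex0 //.
  rewrite -cT; apply: card_le_of => x /setIP [/setUP [xS|//] xl].
  by move: eS; rewrite -(Xil x (subsetP Si x xS) xl) xS.
have hSq := meet_le1 qi Si.
have hTq := meet_le1 ql Tl.
have cq2 : #|A :&: X q| <= #|S :&: X q| + #|T :&: X q|.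
  by rewrite /A setIUl; apply: leq_card_setU.
have tq := t_pos q.
have hex : 0 < #|A :&: X q| - t q by exact: hq.
have t1 : t q = 1 by move: hex; clear -tq hSq hTq cq2; lia.
have : 0 < #|S :&: X q| by move: hex; clear -tq hSq hTq cq2; lia.
rewrite card_gt0 => /set0Pn [x /setIP [xS xq]].
have : 0 < #|T :&: X q| by move: hex; clear -tq hSq hTq cq2; lia.
rewrite card_gt0 => /set0Pn [y /setIP [yT yq]].
split => //.
- by rewrite /ex; move: hex; clear -tq hSq hTq cq2; lia.
- apply/negP => /eqP cq.
  have xy : x != y by apply/negP => /eqP e1; apply: (ST x xS); rewrite e1.
  have bq := big_of_two xy xq yq t1.
  apply: (nb x y (subsetP Si x xS) _ (subsetP Tl y yT)).
  + by apply/negP => /eqP e1; move: eS; rewrite -e1 xS.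
  + by apply/negP => /eqP e1; move: eT; rewrite -e1 yT.
  + by rewrite -cq col_pair.
- by apply/set0Pn; exists x; rewrite inE xq xS.
- by apply/set0Pn; exists y; rewrite inE yq yT.
Qed.

Lemma sum_ge4 (f : 'I_k -> nat) j1 j2 j3 j4 : j1 != j2 -> j1 != j3 -> j1 != j4 ->
  j2 != j3 -> j2 != j4 -> j3 != j4 -> f j1 + f j2 + f j3 + f j4 <= \sum_(j < k) f j.
Proof.
move=> d12 d13 d14 d23 d24 d34.
rewrite (bigD1 j1) //= (bigD1 j2) /= ?(eq_sym j2) // (bigD1 j3) /= ?(eq_sym j3) ?d13 ?d23 //.
rewrite (bigD1 j4) /= ?(eq_sym j4) ?d14 ?d24 ?d34 //.
rewrite !addnA; exact: leq_addr.
Qed.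

Lemma exc_pair x y : exc [set x; y] <= 1.
Proof.
case: (boolP [exists q, (x \in X q) && (y \in X q)]) => [/existsP [q0 /andP [xq yq]]|hn].
  rewrite /exc (bigD1 q0) //= big1 ?addn0.
    rewrite /ex; apply: leq_trans (leq_sub2r _ (_ : _ <= 2)) _.
      by apply: leq_trans (subset_leq_card (subsetIl _ _)) _; rewrite cards2; case: (x != y).
    by have := t_pos q0; clear; lia.
  move=> q qq; apply: ex0.
  case: (eqVneq x y) => [e|xy].
    by rewrite e setUid; apply: leq_trans (subset_leq_card (subsetIl _ _)) _; rewrite cards1 t_pos.
  apply: leq_trans (t_pos q); apply/card_le1_eqP => z z' /setIP [/set2P [] -> zq] /setIP [/set2P [] -> z'q] //.
    by move: qq; rewrite (same_edge xy xq yq zq z'q) eqxx.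
  by move: qq; rewrite (same_edge xy xq yq z'q zq) eqxx.
rewrite /exc big1 // => q _; apply: ex0; apply: leq_trans (t_pos q).
apply/card_le1_eqP => z z' /setIP [/set2P [] -> zq] /setIP [/set2P [] -> z'q] //.
  by move: hn; rewrite negb_exists => /forallP /(_ q); rewrite zq z'q.
by move: hn; rewrite negb_exists => /forallP /(_ q); rewrite zq z'q.
Qed.

Lemma card2_le (x y : E) : #|[set x; y]| <= 2.
Proof. by rewrite cards2; case: (x != y). Qed.

Lemma card3_le (x y z : E) : #|x |: [set y; z]| <= 3.
Proof. by rewrite cardsU1; apply: (leq_add (leq_b1 _) (card2_le y z)). Qed.

Lemma ex_le m B (P : {set E}) d : (forall x, x \in B -> x \in X m -> x \in P) ->
  #|P| <= t m + d -> ex m B <= d.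
Proof.
move=> h hP; rewrite /ex.
have : #|B :&: X m| <= #|P| by apply: card_le_of => x /setIP [xB xm]; apply: h.
clear -hP; lia.
Qed.

Lemma ex_ge1 m B x y : x != y -> x \in B -> y \in B -> x \in X m -> y \in X m -> t m = 1 ->
  1 <= ex m B.
Proof.
move=> xy xB yB xm ym tm; rewrite /ex tm.
have : #|[set x; y]| <= #|B :&: X m|.
  by apply: card_le_of => z /set2P [] ->; rewrite inE ?xB ?xm ?yB ?ym.
by rewrite cards2 xy; clear; lia.
Qed.

Lemma exists_other (f : 'I_k -> nat) p m : f p <= m -> m < \sum_(j < k) f j ->
  exists2 j, j != p & 0 < f j.
Proof.
move=> hp hs; apply/exists_inP; apply: contraT; rewrite negb_exists_in => /forall_inP h.
move: hs; rewrite (bigD1 p) //= big1 ?addn0.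
  by move=> hs; move: (leq_ltn_trans hp hs); rewrite ltnn.
by move=> j jp; move: (h j jp); case: (f j).
Qed.

Lemma tri i1 i2 i3 a b c h p : i1 != i2 -> i1 != i3 -> i2 != i3 ->
  a \in X i1 -> b \in X i1 -> h \in X i1 -> a \in X i2 -> c \in X i2 -> b \in X i3 -> c \in X i3 ->
  a != b -> a != c -> b != c -> h != a -> h != b ->
  t i1 = 1 -> t i2 = 1 -> t i3 = 1 -> col i1 = p -> col i2 = p -> col i3 = p -> False.
Proof.
move=> d12 d13 d23 a1 b1 h1 a2 c2 b3 c3 ab ac bc ha hb t1 t2 t3 ci1 ci2 ci3.
have bg1 := big_of_two ab a1 b1 t1.
have bg2 := big_of_two ac a2 c2 t2.
have bg3 := big_of_two bc b3 c3 t3.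
have c1n : c \notin X i1 by apply/negP => c1; move/eqP: ac; apply; apply: (meet1 d12).
have h2n : h \notin X i2 by apply/negP => h2; move/eqP: ha; apply; apply: (meet1 d12).
have h3n : h \notin X i3 by apply/negP => h3; move/eqP: hb; apply; apply: (meet1 d13).
have a3n : a \notin X i3 by apply/negP => a3; move/eqP: ab; apply; apply: (meet1 d13).
have b2n : b \notin X i2 by apply/negP => b2; move/eqP: ab; apply; apply: (meet1 d12).
have hc : h != c by apply/negP => /eqP e1; move: c1n; rewrite -e1 h1.
have Na : N p [set a] = 1 by rewrite -ci1 col_nl.
have Nb : N p [set b] = 1 by rewrite -ci1 col_nl.
have Nh : N p [set h] = 1 by rewrite -ci1 col_nl.
have Nc : N p [set c] = 1 by rewrite -ci2 col_nl.
have pab : N p [set a; b] <= 1 by rewrite -ci1 col_pair.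
have pha : N p [set h; a] <= 1 by rewrite -ci1 col_pair.
have pac : N p [set a; c] <= 1 by rewrite -ci2 col_pair.
have phc := par_trans (HN p) pha pac Na.
have [i4 [h4 c4 t4 ci4]] := par_edge hc Nh Nc phc.
have d14 : i1 != i4 by apply/negP => /eqP e1; move: c1n; rewrite e1 c4.
have d24 : i2 != i4 by apply/negP => /eqP e1; move: h2n; rewrite e1 h4.
have d34 : i3 != i4 by apply/negP => /eqP e1; move: h3n; rewrite e1 h4.
have a4n : a \notin X i4 by apply/negP => a4; move/eqP: ha; apply; apply: (meet1 d14 h1 a1 h4 a4).
have b4n : b \notin X i4 by apply/negP => b4; move/eqP: hb; apply; apply: (meet1 d14 h1 b1 h4 b4).
set A := [set a; b] :|: [set c; h].
have Aall : forall x, x \in A -> [\/ x = a, x = b, x = c | x = h].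
  by move=> x /setUP [/set2P [] ->|/set2P [] ->]; [constructor 1|constructor 2|constructor 3|constructor 4].
have aA : a \in A by rewrite !inE eqxx.
have bA : b \in A by rewrite !inE eqxx orbT.
have cA : c \in A by rewrite !inE eqxx !orbT.
have hA : h \in A by rewrite !inE eqxx !orbT.
have nlA : forall x, x \in A -> N p [set x] = 1 by move=> x /Aall [] ->.
have pA : N p A <= 1.
  rewrite -Na -(setUidPr (_ : [set a] \subset A)); last by rewrite sub1set.
  apply: (clos (HN p)) => x /Aall [] ->; rewrite Na.
  - by apply: leq_trans (r_card (HN p) _) _; rewrite cards2 eqxx.
  - by rewrite setUC.
  - by rewrite setUC.
  - done.
have cA4 : #|A| = 4.
  rewrite cardsU (_ : [set a; b] :&: [set c; h] = set0) ?cards0 ?cards2 ?ab.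
    by rewrite (_ : (c != h) = true) //; rewrite eq_sym.
  apply/setP => x; rewrite !inE; apply/negbTE/negP => /andP [/orP [] /eqP -> /orP [] /eqP e1].
  - by move/eqP: ac.
  - by move/eqP: ha; rewrite e1.
  - by move/eqP: bc.
  - by move/eqP: hb; rewrite e1.
have pB : forall B, B \subset A -> N p B <= 1 by move=> B sB; apply: leq_trans (r_mono (HN p) sB) pA.
have other : forall q, q != i1 -> q != i2 -> q != i3 -> q != i4 -> #|A :&: X q| <= 1.
  move=> q q1 q2 q3 q4; apply/card_le1_eqP => x y /setIP [xA xq] /setIP [yA yq].
  case: (eqVneq x y) => // xy; exfalso.
  have cov : exists m, [/\ x \in X m, y \in X m & [|| m == i1, m == i2, m == i3 | m == i4]].
    move: xy; case/Aall: xA => ->; case/Aall: yA => -> xy; rewrite ?eqxx // in xy;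
    first [ by exists i1; rewrite !eqxx | by exists i2; rewrite !eqxx ?orbT
          | by exists i3; rewrite !eqxx ?orbT | by exists i4; rewrite !eqxx ?orbT ].
  case: cov => m [xm ym]; rewrite -!(same_edge xy xq yq xm ym) => /or4P [] /eqP e1.
  - by move/eqP: q1.
  - by move/eqP: q2.
  - by move/eqP: q3.
  - by move/eqP: q4.
have excB : forall B, B \subset A -> exc B = ex i1 B + ex i2 B + ex i3 B + ex i4 B.
  move=> B sB; rewrite /exc (bigD1 i1) //= (bigD1 i2) /= ?(eq_sym i2) // (bigD1 i3) /= ?(eq_sym i3) ?d13 ?d23 //.
  rewrite (bigD1 i4) /= ?(eq_sym i4) ?d14 ?d24 ?d34 // big1 ?addn0 ?addnA //.
  move=> q hq; apply: ex0; apply: leq_trans (t_pos q).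
  have q1 : q != i1 by move: hq; case: (q == i1); rewrite ?andbF.
  have q2 : q != i2 by move: hq; case: (q == i2); rewrite ?andbF.
  have q3 : q != i3 by move: hq; case: (q == i3); rewrite ?andbF.
  have q4 : q != i4 by move: hq; case: (q == i4); rewrite ?andbF.
  apply: leq_trans (other q q1 q2 q3 q4); apply: subset_leq_card; exact: setSI.
have eA : exc A <= 5.
  rewrite excB //.
  have e1 : ex i1 A <= 2.
    apply: (ex_le (P := h |: [set a; b])); last by rewrite t1; exact: card3_le.
    move=> x /Aall [] -> xm; first [by rewrite !inE eqxx ?orbT | by rewrite (negPf c1n) in xm].
  have e2 : ex i2 A <= 1.
    apply: (ex_le (P := [set a; c])); last by rewrite t2; exact: card2_le.
    move=> x /Aall [] -> xm; first [by rewrite !inE eqxx ?orbT | by rewrite ?(negPf b2n) ?(negPf h2n) in xm].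
  have e3 : ex i3 A <= 1.
    apply: (ex_le (P := [set b; c])); last by rewrite t3; exact: card2_le.
    move=> x /Aall [] -> xm; first [by rewrite !inE eqxx ?orbT | by rewrite ?(negPf a3n) ?(negPf h3n) in xm].
  have e4 : ex i4 A <= 1.
    apply: (ex_le (P := [set h; c])); last by rewrite t4; exact: card2_le.
    move=> x /Aall [] -> xm; first [by rewrite !inE eqxx ?orbT | by rewrite ?(negPf a4n) ?(negPf b4n) in xm].
  clear -e1 e2 e3 e4; lia.
have cbA : cond A.
  right; left; split; first exact: cA4.
  exists i1, i2, i3; split; first by rewrite d12 d13 d23.
  split; first by [].
  exists h => //; split; first by rewrite /cnt3 h1 (negPf h2n) (negPf h3n).
  move=> y /Aall [] -> hy; rewrite /cnt3.
  - by rewrite a1 a2 (negPf a3n).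
  - by rewrite b1 b3 (negPf b2n).
  - by rewrite c2 c3 (negPf c1n).
  - by rewrite eqxx in hy.
have dA : 3 <= defj p A.
  rewrite /defj /def -/(nlj p A) nl_all // cA4; clear -pA; lia.
have pz : forall j x y, j != p -> x \in A -> y \in A -> x != y -> defj j [set x; y] = 0.
  move=> j x y jp xA yA xy.
  have cxy : cond [set x; y] by left; rewrite /cond_a; apply: leq_trans (card2_le x y) _.
  have hs := key cxy; have he := exc_pair x y.
  have hp : 1 <= defj p [set x; y].
    rewrite /defj /def -/(nlj p _) nl_all ?cards2 ?xy.
      have := pB [set x; y] (pair_sub xA yA); clear; lia.
    by move=> z /set2P [] ->; apply: nlA.
  have pj : p != j by rewrite eq_sym.
  have := sum_ge2 (defj^~ [set x; y]) pj.
  rewrite hs /=; clear -he hp; lia.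
have trl : forall j (T : {set E}), j != p -> T \subset A -> #|T| = 3 -> has j T ->
    forall x, x \in T -> N j [set x] = 1.
  move=> j T jp sT cT hj x xT; have := Nle1 j x.
  case hx: (N j [set x]) => [|[|//]] _ //.
  have := def_loop (HN j) xT hx.
  have : #|T :\ x| == 2 by rewrite subD1_card // cT.
  case/cards2P => y [z [yz eT]].
  have yA : y \in A by apply: (subsetP sT); apply: (subsetP (subD1set T x)); rewrite eT !inE eqxx.
  have zA : z \in A by apply: (subsetP sT); apply: (subsetP (subD1set T x)); rewrite eT !inE eqxx orbT.
  rewrite eT; have := pz j y z jp yA zA yz; rewrite /defj => ->.
  by move: hj; rewrite /has /defj; clear; lia.
set T0 := h |: [set a; b].
have T0A : T0 \subset A by rewrite subUset sub1set hA pair_sub.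
have cT0 : #|T0| = 3.
  rewrite cardsU1 cards2 ab !inE negb_or ha hb; done.
have eT0 : exc T0 <= 2.
  rewrite excB //.
  have e1 : ex i1 T0 <= 2.
    apply: (ex_le (P := T0)) => //; by rewrite t1 cT0.
  have e2 : ex i2 T0 <= 0.
    apply: (ex_le (P := [set a])); last by rewrite t2 cards1.
    move=> x /setU1P [->|/set2P [] ->] xm; rewrite ?inE ?eqxx //.
      by rewrite (negPf h2n) in xm.
    by rewrite (negPf b2n) in xm.
  have e3 : ex i3 T0 <= 0.
    apply: (ex_le (P := [set b])); last by rewrite t3 cards1.
    move=> x /setU1P [->|/set2P [] ->] xm; rewrite ?inE ?eqxx //.
      by rewrite (negPf h3n) in xm.
    by rewrite (negPf a3n) in xm.
  have e4 : ex i4 T0 <= 0.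
    apply: (ex_le (P := [set h])); last by rewrite t4 cards1.
    move=> x /setU1P [->|/set2P [] ->] xm; rewrite ?inE ?eqxx //.
      by rewrite (negPf a4n) in xm.
    by rewrite (negPf b4n) in xm.
  clear -e1 e2 e3 e4; lia.
have mrg : forall j (T T' : {set E}) x y, j != p -> T \subset A -> T' \subset A -> #|T| = 3 -> #|T'| = 3 ->
    has j T -> has j T' -> x != y -> x \in T -> x \in T' -> y \in T -> y \in T' ->
    T0 \subset T :|: T' -> False.
  move=> j T T' x y jp sT sT' cT cT' hT hT' xy xT xT' yT yT' s0.
  have nT := trl j T jp sT cT hT.
  have nT' := trl j T' jp sT' cT' hT'.
  have rT : N j T <= 2.
    move: hT; rewrite /has /defj /def -/(nlj j T) nl_all // cT; clear; lia.
  have rT' : N j T' <= 2.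
    move: hT'; rewrite /has /defj /def -/(nlj j T') nl_all // cT'; clear; lia.
  have rI : 2 <= N j (T :&: T').
    apply: leq_trans (r_mono (HN j) (_ : [set x; y] \subset T :&: T')); last first.
      by apply: pair_sub; rewrite inE ?xT ?xT' ?yT ?yT'.
    have := pz j x y jp (subsetP sT x xT) (subsetP sT y yT) xy.
    rewrite /defj /def -/(nlj j _) nl_all ?cards2 ?xy; first by clear; lia.
    by move=> z /set2P [] ->; apply: nT.
  have rU := r_sub (HN j) T T'.
  have r0 : N j T0 <= 2.
    apply: leq_trans (r_mono (HN j) s0) _; clear -rT rT' rI rU; lia.
  have hj0 : 1 <= defj j T0.
    rewrite /defj /def -/(nlj j T0) nl_all ?cT0; first by clear -r0; lia.
    by move=> z /(subsetP s0) /setUP [] ?; [apply: nT| apply: nT'].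
  have hp0 : 2 <= defj p T0.
    rewrite /defj /def -/(nlj p T0) nl_all ?cT0.
      have := pB T0 T0A; clear; lia.
    by move=> z zT; apply: nlA; apply: (subsetP T0A).
  have c0 : cond T0 by left; rewrite /cond_a cT0.
  have pj : p != j by rewrite eq_sym.
  have := sum_ge2 (defj^~ T0) pj.
  rewrite key //= => hh; clear -hh hj0 hp0 eT0; lia.
have getj : forall T : {set E}, T \subset A -> #|T| = 3 -> 3 <= exc T -> exists2 j, j != p & has j T.
  move=> T sT cT eT; apply: (exists_other (m := 2)).
    rewrite /defj /def; have := nl_le (HN p) T; rewrite cT.
    have : 1 <= N p T.
      have : 0 < #|T| by rewrite cT.
      rewrite card_gt0 => /set0Pn [x xT]; rewrite -(nlA x (subsetP sT x xT)).
      by apply: (r_mono (HN p)); rewrite sub1set.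
    clear; lia.
  have cT3 : cond T by left; rewrite /cond_a cT.
  by rewrite (key cT3).
set T1 := c |: [set a; b].
set T2 := c |: [set a; h].
set T3 := c |: [set b; h].
have ca : c != a by rewrite eq_sym.
have cb : c != b by rewrite eq_sym.
have ch : c != h by rewrite eq_sym.
have ah : a != h by rewrite eq_sym.
have bh : b != h by rewrite eq_sym.
have cT1 : #|T1| = 3 by rewrite cardsU1 cards2 ab !inE negb_or ca cb.
have cT2 : #|T2| = 3 by rewrite cardsU1 cards2 ah !inE negb_or ca ch.
have cT3 : #|T3| = 3 by rewrite cardsU1 cards2 bh !inE negb_or cb ch.
have sT1 : T1 \subset A by rewrite subUset sub1set cA pair_sub.
have sT2 : T2 \subset A by rewrite subUset sub1set cA pair_sub.
have sT3 : T3 \subset A by rewrite subUset sub1set cA pair_sub.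
have inT : forall x y z : E, x \in z |: [set x; y] /\ y \in z |: [set x; y] /\ z \in z |: [set x; y].
  by move=> x y z; rewrite !inE !eqxx ?orbT.
have [j1 j1p h1j] : exists2 j, j != p & has j T1.
  apply: getj => //; rewrite excB //.
  have := @ex_ge1 _ T1 _ _ ab (proj1 (inT a b c)) (proj1 (proj2 (inT a b c))) a1 b1 t1.
  have := @ex_ge1 _ T1 _ _ ac (proj1 (inT a b c)) (proj2 (proj2 (inT a b c))) a2 c2 t2.
  have := @ex_ge1 _ T1 _ _ bc (proj1 (proj2 (inT a b c))) (proj2 (proj2 (inT a b c))) b3 c3 t3.
  clear; lia.
have [j2 j2p h2j] : exists2 j, j != p & has j T2.
  apply: getj => //; rewrite excB //.
  have := @ex_ge1 _ T2 _ _ ah (proj1 (inT a h c)) (proj1 (proj2 (inT a h c))) a1 h1 t1.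
  have := @ex_ge1 _ T2 _ _ ac (proj1 (inT a h c)) (proj2 (proj2 (inT a h c))) a2 c2 t2.
  have := @ex_ge1 _ T2 _ _ hc (proj1 (proj2 (inT a h c))) (proj2 (proj2 (inT a h c))) h4 c4 t4.
  clear; lia.
have [j3 j3p h3j] : exists2 j, j != p & has j T3.
  apply: getj => //; rewrite excB //.
  have := @ex_ge1 _ T3 _ _ bh (proj1 (inT b h c)) (proj1 (proj2 (inT b h c))) b1 h1 t1.
  have := @ex_ge1 _ T3 _ _ bc (proj1 (inT b h c)) (proj2 (proj2 (inT b h c))) b3 c3 t3.
  have := @ex_ge1 _ T3 _ _ hc (proj1 (proj2 (inT b h c))) (proj2 (proj2 (inT b h c))) h4 c4 t4.
  clear; lia.
have d12j : j1 != j2.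
  apply/negP => /eqP e1; rewrite -e1 in h2j.
  apply: (mrg j1 T1 T2 a c j1p sT1 sT2 cT1 cT2 h1j h2j ac); rewrite ?inE ?eqxx ?orbT //.
  by apply/subsetP => x /setU1P [->|/set2P [] ->]; rewrite !inE !eqxx ?orbT.
have d13j : j1 != j3.
  apply/negP => /eqP e1; rewrite -e1 in h3j.
  apply: (mrg j1 T1 T3 b c j1p sT1 sT3 cT1 cT3 h1j h3j bc); rewrite ?inE ?eqxx ?orbT //.
  by apply/subsetP => x /setU1P [->|/set2P [] ->]; rewrite !inE !eqxx ?orbT.
have d23j : j2 != j3.
  apply/negP => /eqP e1; rewrite -e1 in h3j.
  apply: (mrg j2 T2 T3 c h j2p sT2 sT3 cT2 cT3 h2j h3j ch); rewrite ?inE ?eqxx ?orbT //.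
  by apply/subsetP => x /setU1P [->|/set2P [] ->]; rewrite !inE !eqxx ?orbT.
have pj1 : p != j1 by rewrite eq_sym.
have pj2 : p != j2 by rewrite eq_sym.
have pj3 : p != j3 by rewrite eq_sym.
have := sum_ge4 (defj^~ A) pj1 pj2 pj3 d12j d13j d23j.
rewrite (key cbA) /=.
have g1 : 1 <= defj j1 A by apply: leq_trans h1j (def_mono (HN j1) sT1).
have g2 : 1 <= defj j2 A by apply: leq_trans h2j (def_mono (HN j2) sT2).
have g3 : 1 <= defj j3 A by apply: leq_trans h3j (def_mono (HN j3) sT3).
move=> hh; clear -hh g1 g2 g3 dA eA; lia.
Qed.

Lemma third x y B : x \in B -> y \in B -> B != [set x; y] -> exists h, [/\ h \in B, h != x & h != y].
Proof.
move=> xB yB nB.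
case: (boolP [exists h, [&& h \in B, h != x & h != y]]) => [/existsP [h /and3P [h1 h2 h3]]|].
  by exists h.
rewrite negb_exists => /forallP hn.
case/negP: nB; rewrite eqEsubset pair_sub // andbT; apply/subsetP => z zB.
by move: (hn z); rewrite zB !inE /= negb_and !negbK => /orP [] ->; rewrite ?orbT.
Qed.

Lemma inj_col i l e : i != l -> big i -> big l -> e \in X i -> e \in X l -> col i = col l -> False.
Proof.
move=> il bi bl ei el cil.
set p := col i.
have li : l != i by rewrite eq_sym.
case: (leqP 2 (t i)) => ti; first exact: (inj_core il bi bl ei el (erefl p) (esym cil) ti).
case: (leqP 2 (t l)) => tl; first exact: (inj_core li bl bi el ei (esym cil) (erefl _) tl).
have t1i : t i = 1 by have := t_pos i; clear -ti; lia.
have t1l : t l = 1 by have := t_pos l; clear -tl; lia.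
have : 0 < #|X i :\ e| by rewrite subD1_card //; move: bi; rewrite /big t1i; clear; lia.
rewrite card_gt0 => /set0Pn [s /setD1P [se si]].
have : 0 < #|X l :\ e| by rewrite subD1_card //; move: bl; rewrite /big t1l; clear; lia.
rewrite card_gt0 => /set0Pn [u /setD1P [ue ul]].
have ui : u \notin X i by apply/negP => ui; move/eqP: ue; apply; apply: (meet1 il ui ei ul el).
have sl : s \notin X l by apply/negP => sl; move/eqP: se; apply; apply: (meet1 il si ei sl el).
have su : s != u by apply/negP => /eqP e1; move: ui; rewrite -e1 si.
have es : e != s by rewrite eq_sym.
have eu : e != u by rewrite eq_sym.
have pes : N p [set s; e] <= 1 by rewrite setUC /p col_pair.
have peu : N p [set e; u] <= 1 by rewrite /p cil col_pair.
have psu := par_trans (HN p) pes peu (col_nl bi ei).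
have Nu : N p [set u] = 1 by rewrite /p cil col_nl.
have [q [sq uq tq cq]] := par_edge su (col_nl bi si) Nu psu.
have qi : i != q by apply/negP => /eqP e1; move: ui; rewrite e1 uq.
have ql : l != q by apply/negP => /eqP e1; move: sl; rewrite e1 sq.
case: (boolP (X i == [set e; s])) => [/eqP Xi|Xi]; last first.
  have [h [hi he hs]] := third ei si Xi.
  exact: (tri il qi ql ei si hi el ul sq uq es eu su he hs t1i t1l tq (erefl p) (esym cil) cq).
case: (boolP (X l == [set e; u])) => [/eqP Xl|Xl]; last first.
  have [h [hl he hu]] := third el ul Xl.
  have uq' : u \in X q := uq.
  have us : u != s by rewrite eq_sym.
  exact: (tri li ql qi el ul hl ei si uq sq eu es us he hu t1l t1i tq (esym cil) (erefl p) cq).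
case: (boolP (X q == [set s; u])) => [/eqP Xq|Xq]; last first.
  have [h [hq hs hu]] := third sq uq Xq.
  have iq : q != i by rewrite eq_sym.
  have lq : q != l by rewrite eq_sym.
  exact: (tri iq lq il sq uq hq si ei ul el su se ue hs hu tq t1i t1l cq (erefl p) (esym cil)).
apply: H3; exists e, s, u; split; first by rewrite es eu su.
by exists i, l, q.
Qed.

Lemma nonbig i : ~~ big i -> t i = 1 /\ exists e, X i = [set e].
Proof.
move=> nb; have t1 : t i = 1.
  by case: (HT i) => // [[_ hlt]]; move: nb; rewrite /big hlt.
split => //.
have : #|X i| <= 1 by move: nb; rewrite /big -leqNgt t1.
have : 0 < #|X i| by rewrite card_gt0.
move=> h1 h2; have /cards1P [e ->] : #|X i| == 1 by rewrite eqn_leq h1 h2.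
by exists e.
Qed.

Definition Bg e := [set l | big l && (e \in X l)].
Definition scol i := if [pick x in X i] is Some e then odflt j0 [pick j in M e :\: col @: Bg e] else j0.

Lemma wE e : w X e = #|[set l | e \in X l]|.
Proof. by []. Qed.

Lemma scol_spec i e : ~~ big i -> X i = [set e] -> scol i \in M e /\ scol i \notin col @: Bg e.
Proof.
move=> nb Xi; rewrite /scol.
case: pickP => [x|]; last by move/(_ e); rewrite Xi inE eqxx.
rewrite Xi inE => /eqP ->.
case: pickP => [j|none]; first by rewrite inE => /andP [-> ->].
exfalso.
have sub : col @: Bg e \subset M e.
  by apply/subsetP => j /imsetP [l]; rewrite inE => /andP [bl el] ->; rewrite inE col_nl.
have cB : #|Bg e| < w X e.
  rewrite wE; apply: proper_card; rewrite properEneq; apply/andP; split.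
    apply/negP => /eqP e1; have : i \in [set l | e \in X l] by rewrite inE Xi inE.
    by rewrite -e1 inE (negPf nb).
  by apply/subsetP => l; rewrite !inE => /andP [].
have : #|col @: Bg e| < #|M e| by rewrite cardM; apply: leq_ltn_trans (leq_imset_card _ _) cB.
move=> h; have : 0 < #|M e :\: col @: Bg e|.
  by have := cardsID (col @: Bg e) (M e); have := subset_leq_card (subsetIr (M e) (col @: Bg e)); clear -h; lia.
by rewrite card_gt0 => /set0Pn [j]; rewrite none.
Qed.

Definition cc i := if big i then col i else scol i.

Lemma cc_nl i x : x \in X i -> N (cc i) [set x] = 1.
Proof.
rewrite /cc; case: ifP => bi xi; first exact: col_nl.
have [_ [e Xi]] := nonbig (negbT bi).
have [h _] := scol_spec (negbT bi) Xi.
by move: xi h; rewrite Xi inE => /eqP ->; rewrite inE => /eqP.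
Qed.

Lemma cc_proper : proper_coloring X cc.
Proof.
move=> i l /andP [il /set0Pn [e /setIP [ei el]]].
rewrite /cc; case: ifP => bi; case: ifP => bl.
- by apply/negP => /eqP; apply: inj_col il bi bl ei el.
- have [_ [e' Xl]] := nonbig (negbT bl).
  have [_ h] := scol_spec (negbT bl) Xl.
  move: el h; rewrite Xl inE => /eqP <- h.
  apply/negP => /eqP e1; case/negP: h; apply/imsetP; exists i => //.
  by rewrite inE bi ei.
- have [_ [e' Xi]] := nonbig (negbT bi).
  have [_ h] := scol_spec (negbT bi) Xi.
  move: ei h; rewrite Xi inE => /eqP <- h.
  apply/negP => /eqP e1; case/negP: h; apply/imsetP; exists l => //.
  by rewrite inE bl el.
- have [_ [e1 Xi]] := nonbig (negbT bi).
  have [_ [e2 Xl]] := nonbig (negbT bl).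
  move: ei el; rewrite Xi Xl !inE => /eqP -> /eqP e12.
  by move: il; rewrite (HXinj (etrans Xi (etrans (congr1 (fun z => [set z]) e12) (esym Xl)))) eqxx.
Qed.

Lemma adjP i l x : i != l -> x \in X i -> x \in X l -> cc i != cc l.
Proof. by move=> il xi xl; apply: cc_proper; rewrite /lg_adj il; apply/set0Pn; exists x; rewrite inE xi xl. Qed.

Lemma two_rank i l : i != l -> cc i = cc l -> 2 <= N (cc i) setT.
Proof.
move=> il cil.
have big2 : forall h, big h -> 2 <= t h -> 2 <= N (cc h) setT.
  move=> h bh th; have [C [sC cC]] := sub_card bh.
  rewrite /cc bh; apply: leq_trans (r_mono (HN _) (subsetT C)).
  by rewrite col_circ.
case: (boolP (big i && (2 <= t i))) => [/andP [bi ti]|ni]; first exact: big2.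
case: (boolP (big l && (2 <= t l))) => [/andP [bl tl]|nl']; first by rewrite cil; apply: big2.
have t1of : forall h, ~~ (big h && (2 <= t h)) -> t h = 1.
  move=> h; case: (boolP (big h)) => bh /=; last by case: (nonbig bh).
  by rewrite -ltnNge => th; have := t_pos h; clear -th; lia.
have ti := t1of i ni; have tl := t1of l nl'.
have dis : forall x, x \in X i -> x \in X l -> False.
  by move=> x xi xl; move: (adjP il xi xl); rewrite cil eqxx.
have [x xi] := set0Pn _ (HXne i).
have [y yl] := set0Pn _ (HXne l).
have xy : x != y by apply/negP => /eqP e1; apply: (dis x xi); rewrite e1.
set j := cc i.
have Nx : N j [set x] = 1 by apply: cc_nl.
have Ny : N j [set y] = 1 by rewrite /j cil; apply: cc_nl.
case: (leqP 2 (N j [set x; y])) => hxy.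
  by apply: leq_trans hxy (r_mono (HN _) (subsetT _)).
have [q [xq yq tq cq]] := par_edge xy Nx Ny hxy.
have bq := big_of_two xy xq yq tq.
have qi : q != i by apply/negP => /eqP e1; apply: (dis y); rewrite -?e1 // ; by rewrite e1 in yq.
have := adjP qi xq xi; rewrite /cc bq -/(cc i) -/j cq eqxx.
done.
Qed.

Lemma part1_ineq : c1 cc + 2 * c2p cc <= \sum_(j < k) N j setT.
Proof.
rewrite /c1 /c2p !card_set_sum big_distrr /= -big_split /=.
apply: leq_sum => j _.
set S := [set h | cc h == j].
case: (posnP #|S|) => [->//|S0].
have [h hS] : exists h, h \in S by apply/set0Pn; rewrite -card_gt0.
move: (hS); rewrite inE => /eqP chj.
case: (leqP 2 #|S|) => S2.
  have /card_gt1P [h1 [h2 [h1S h2S h12]]] := S2.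
  move: h1S h2S; rewrite !inE => /eqP c1j /eqP c2j.
  have := two_rank h12 (etrans c1j (esym c2j)); rewrite c1j.
  by rewrite (_ : (#|S| == 1) = false) ?muln1 //; apply/negbTE; rewrite neq_ltn S2 orbT.
have -> : #|S| == 1 by rewrite eqn_leq -ltnS S2 S0.
rewrite muln0 addn0.
have [x xh] := set0Pn _ (HXne h).
apply: leq_trans (r_mono (HN j) (subsetT [set x])).
by rewrite -chj cc_nl.
Qed.

Lemma surj j x : N j [set x] = 1 -> exists2 h, x \in X h & cc h = j.
Proof.
move=> hx.
set H := [set h | x \in X h].
have sub : cc @: H \subset M x.
  by apply/subsetP => i /imsetP [h]; rewrite inE => hx' ->; rewrite inE cc_nl.
have inj : {in H &, injective cc}.
  move=> h h'; rewrite !inE => xh xh' e; apply/eqP; apply: contraT => hh.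
  by move: (adjP hh xh xh'); rewrite e eqxx.
have eq : cc @: H = M x.
  apply/eqP; rewrite eqEcard sub /= card_in_imset // cardM.
  by rewrite wE.
have : j \in cc @: H by rewrite eq inE hx.
by case/imsetP => h; rewrite inE => xh ->; exists h.
Qed.

Lemma cc_rank i : N (cc i) (X i) <= t i.
Proof.
rewrite /cc; case: ifP => bi; last first.
  have [t1 [e Xi]] := nonbig (negbT bi).
  by rewrite t1; apply: leq_trans (r_card (HN _) _) _; rewrite Xi cards1.
have [C [sC cC]] : exists C : {set E}, C \subset X i /\ #|C| = t i by apply: sub_card; apply: ltnW.
have rC : N (col i) C <= t i by rewrite -cC; exact: r_card.
apply: leq_trans (r_mono (HN _) (subsetUr C (X i))) _.
apply: leq_trans (clos (HN (col i)) _) rC.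
move=> x xi; case: (boolP (x \in C)) => xC.
  by rewrite (setUidPr (_ : [set x] \subset C)) // sub1set.
have sC' : x |: C \subset X i by rewrite subUset sub1set xi sC.
rewrite col_circ //; last by rewrite cardsU1 xC cC.
have -> : N (col i) C = #|C|.
  apply: (small_r sC); first by rewrite cC.
  by move=> y yC; apply: col_nl => //; apply: (subsetP sC).
by rewrite cC.
Qed.

Lemma r_bigcup j (P : pred 'I_n) (F : 'I_n -> {set E}) :
  N j (\bigcup_(h | P h) F h) <= \sum_(h | P h) N j (F h).
Proof.
apply: (big_ind2 (fun S m => N j S <= m)) => //.
- by rewrite r0.
- move=> S1 m1 S2 m2 h1 h2; apply: leq_trans (r_subadd (HN j) _ _) _; exact: leq_add.
Qed.

Lemma upper j A : N j A <= phi_rank X t cc j A.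
Proof.
set Y := \bigcup_(h | cc h == j) (A :&: X h).
have sY : Y \subset A by apply/bigcupsP => h _; apply: subsetIl.
apply: leq_trans (r_le_sub (HN j) sY) _.
have -> : nl (N j) (A :\: Y) = 0.
  apply: big1 => x /setDP [xA xY]; have := Nle1 j x.
  case hx: (N j [set x]) => [//|[|//]] _.
  have [h xh chj] := surj hx.
  by move: xY; rewrite (subsetP (bigcup_sup h (_ : cc h == j)) x) //; [rewrite chj | rewrite inE xA xh].
rewrite addn0; apply: leq_trans (r_bigcup _ _ _) _.
apply: leq_sum => h /eqP chj; rewrite leq_min r_card //=.
by apply: leq_trans (r_mono (HN j) (subsetIr _ _)) _; rewrite -chj cc_rank.
Qed.

Lemma sum_phi (c : 'I_n -> 'I_k) A : \sum_(j < k) phi_rank X t c j A = rho X t A.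
Proof. by rewrite /rho (partition_big c predT) //. Qed.

Lemma eq_of_sum (a b : 'I_k -> nat) : (forall j, a j <= b j) -> \sum_(j < k) a j = \sum_(j < k) b j ->
  forall j, a j = b j.
Proof.
move=> le eq j; apply/eqP; rewrite eqn_leq le /=; apply: contraT; rewrite -ltnNge => lt.
have : \sum_(j0 < k) a j0 < \sum_(j0 < k) b j0.
  rewrite (bigD1 j) //= [X in _ < X](bigD1 j) //=.
  by rewrite -addSn; apply: leq_add => //; apply: leq_sum => i _; apply: le.
by rewrite eq ltnn.
Qed.

Lemma part2 : (forall A, \sum_(j < k) N j A = rho X t A) -> forall j A, N j A = phi_rank X t cc j A.
Proof.
move=> hall j A; apply: (eq_of_sum (a := N ^~ A) (b := fun j => phi_rank X t cc j A)).
- by move=> j'; apply: upper.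
- by rewrite hall sum_phi.
Qed.

End Hyp.

Section Phi.
Variables (E : finType) (n : nat) (X : 'I_n -> {set E}) (t : 'I_n -> nat).

Lemma min_submod (a b u i tt : nat) : u + i = a + b -> i <= a -> i <= b ->
  minn u tt + minn i tt <= minn a tt + minn b tt.
Proof. lia. Qed.

Lemma phi_matroid k (c : 'I_n -> 'I_k) (j : 'I_k) : proper_coloring X c ->
  matroid_rank (phi_rank X t c j).
Proof.
move=> pc; split.
- move=> A; rewrite /phi_rank.
  apply: leq_trans (_ : \sum_(h < n | c h == j) #|A :&: X h| <= _).
    by apply: leq_sum => h _; apply: geq_minl.
  have -> : \sum_(h < n | c h == j) #|A :&: X h| = \sum_(h < n | c h == j) \sum_(x in A) (x \in X h).
    apply: eq_bigr => h _; rewrite -sum1_card big_mkcond [RHS]big_mkcond /=.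
    by apply: eq_bigr => x _; rewrite !inE; case: (x \in A); case: (x \in X h).
  rewrite exchange_big /= -[X in _ <= X]sum1_card; apply: leq_sum => x xA.
  have -> : \sum_(h < n | c h == j) (x \in X h) = #|[set h | (c h == j) && (x \in X h)]|.
    rewrite card_set_sum big_mkcond /=; apply: eq_bigr => h _.
    by case: (c h == j).
  apply/card_le1_eqP => h h'; rewrite !inE => /andP [/eqP ch xh] /andP [/eqP ch' xh'].
  apply/eqP; apply: contraT => hh; exfalso.
  have hh2 : h != h' by case: (h =P h') hh => // ->; rewrite eqxx.
  have hx : X h :&: X h' != set0 by apply/set0Pn; exists x; rewrite inE xh xh'.
  have := pc h h'; rewrite /lg_adj hh2 hx ch ch' eqxx.
  by move=> /(_ isT).
- move=> A B sAB; apply: leq_sum => h _.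
  have := subset_leq_card (setSI (X h) sAB).
  by move=> h1; rewrite leq_min geq_minr andbT; apply: leq_trans (geq_minl _ _) h1.
- move=> A B; rewrite /phi_rank -!big_split /=; apply: leq_sum => h _.
  apply: min_submod.
  + by rewrite setIUl setIIl cardsUI.
  + by apply: subset_leq_card; apply: setSI; apply: subsetIl.
  + by apply: subset_leq_card; apply: setSI; apply: subsetIr.
Qed.

End Phi.

Section Chi.
Variables (E : finType) (n : nat) (X : 'I_n -> {set E}).

Lemma chi_min K : colorable X K -> chi X <= K.
Proof. by rewrite /chi; case: ex_minnP => m _ h; apply: h. Qed.

Lemma chi_le m (c : 'I_n -> 'I_m) : proper_coloring X c -> chi X <= #|c @: setT|.
Proof.
move=> pc; apply: chi_min; apply/existsP.
exists [ffun i => enum_rank_in (imset_f c (in_setT i)) (c i)].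
apply/forallP => i; apply/forallP => l; apply/implyP => adj; rewrite !ffunE.
apply/negP => /eqP e.
have := enum_rank_in_inj (imset_f c (in_setT i)) (imset_f c (in_setT l)) e.
by move=> e'; move: (pc i l adj); rewrite e' eqxx.
Qed.

Lemma used_le m (c : 'I_n -> 'I_m) : #|c @: setT| <= c1 c + c2p c.
Proof.
apply: leq_trans (leq_card_setU _ _); apply: subset_leq_card.
apply/subsetP => j /imsetP [i _ ->]; rewrite !inE.
set S := [set h | c h == c i].
have : 0 < #|S| by rewrite card_gt0; apply/set0Pn; exists i; rewrite inE.
by case: #|S| => [|[|]].
Qed.

Lemma chi_le_n : chi X <= n.
Proof.
apply: leq_trans (chi_le (c := id) _) _.
- by move=> i l /andP [il _].
- by apply: leq_trans (max_card _) _; rewrite card_ord.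
Qed.

End Chi.

Import GRing.Theory Num.Theory.
Local Open Scope ring_scope.

Theorem theorem2p9 (E : finType) (n : nat) (X : 'I_n -> {set E}) (t : 'I_n -> nat)
  (HXne : forall i, X i != set0)
  (HXinj : injective X)
  (Ht : forall i, (t i <= #|X i|)%N)
  (H2 : forall i j : 'I_n, i != j -> (#|X i :&: X j| <= 1)%N)
  (H3 : ~ exists a b c : E, [/\ a != b, a != c & b != c] /\
          exists i j l : 'I_n, [/\ X i = [set a; b], X j = [set a; c] & X l = [set b; c]])
  (HT : forall i, t i = 1%N \/
          ((exists2 e, e \in X i & (w X e <= t i)%N) /\ (t i < #|X i|)%N))
  (sigma : {set E} -> int)
  (Hpoly : polymatroid sigma)
  (Hagree : forall A : {set E},
     cond_a A \/ cond_b X t A \/ cond_c X t A \/ cond_d X t A ->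
     sigma A = (rho X t A)%:Z) :
  (forall k : nat, (0 < k)%N -> forall N : 'I_k -> {set E} -> nat, in_Delta sigma N ->
     exists c : 'I_n -> 'I_k, proper_coloring X c /\
       ((c1 c + 2 * c2p c)%N)%:Z <= sigma setT)
  /\
  ((forall A, sigma A = (rho X t A)%:Z) ->
     forall k : nat, (0 < k)%N -> forall N : 'I_k -> {set E} -> nat,
       in_Delta sigma N <->
       exists c : 'I_n -> 'I_k, proper_coloring X c /\
         (forall (i : 'I_k) (A : {set E}), N i A = phi_rank X t c i A))
  /\
  (sigma setT < (chi X)%:Z -> indecomposable sigma).
Proof.
have HcOf : forall k (N : 'I_k -> {set E} -> nat), in_Delta sigma N ->
    forall A, cond X t A -> (\sum_(j < k) N j A)%N = rho X t A.
  move=> k N [HN hs] A cA; have := Hagree A cA; rewrite hs.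
  by case.
have P1 : forall k : nat, (0 < k)%N -> forall N : 'I_k -> {set E} -> nat, in_Delta sigma N ->
     exists c : 'I_n -> 'I_k, proper_coloring X c /\
       ((c1 c + 2 * c2p c)%N)%:Z <= sigma setT.
  move=> k hk N hD; have Hc := HcOf k N hD; case: hD => HN hs.
  exists (cc X t N hk); split; first exact: (cc_proper HXinj H2 HT HXne H3 hk HN Hc).
  by rewrite hs lez_nat; exact: (part1_ineq HXinj H2 HT HXne H3 hk HN Hc).
split; first exact: P1.
split.
  move=> hsr k hk N; split.
    move=> hD; have Hc := HcOf k N hD; case: hD => HN hs.
    have Hall : forall A, (\sum_(j < k) N j A)%N = rho X t A.
      by move=> A; have := hsr A; rewrite hs; case.
    exists (cc X t N hk); split; first exact: (cc_proper HXinj H2 HT HXne H3 hk HN Hc).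
    exact: (part2 HXinj H2 HT HXne H3 hk HN Hc Hall).
  case=> c [pc hN]; split.
    move=> j; have [h1 h2 h3] := phi_matroid t j pc.
    by split => [A|A B sAB|A B]; rewrite ?hN; [apply: h1|apply: h2|apply: h3].
  move=> A; rewrite hsr; congr Posz; rewrite -(sum_phi X t c A).
  by apply: eq_bigr => j _; rewrite hN.
move=> hlt [m [N hD]].
have hD' := hD; case: hD' => HN hs.
case: (posnP m) => [m0|mpos].
  have s0 : forall A, sigma A = 0.
    move=> A; rewrite hs big1 // => -[x hx] _; exfalso; move: hx; rewrite m0.
    done.
  case: (posnP n) => [n0|npos].
    have hc : (chi X <= 0)%N by apply: leq_trans (chi_le_n X) _; rewrite n0.
    move: hlt; rewrite s0 (_ : chi X = 0%N) //.
    by apply/eqP; rewrite -leqn0.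
  have [e ei] := set0Pn _ (HXne (Ordinal npos)).
  have cA : cond X t [set e] by left; rewrite /cond_a cards1.
  have := Hagree _ cA; rewrite s0 (rho1 HT) => /esym; case=> /eqP.
  rewrite -leqn0 leqNgt /w card_gt0 => /set0Pn; apply; exists (Ordinal npos); rewrite inE.
  done.
have [c [pc hc]] := P1 m mpos N hD.
have h1 := chi_le pc.
have h2 := used_le c.
have := Order.POrderTheory.le_lt_trans hc hlt; rewrite ltz_nat => h3.
clear -h1 h2 h3; lia.
Qed.
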